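(* For every integer $n\ge 2$ and every tangential quadrilateral $Q$, there exists an $n\times n$ grid dissection of $Q$ into $n^2$ smaller quadrilaterals, each of which is tangential.
   Context: A convex quadrilateral is tangential if it has an inscribed circle tangent to all four sides; equivalently (Pitot–Steiner), the sums of the lengths of the two pairs of opposite sides are equal. Let $ABCD$ be a convex quadrilateral and $m,n$ positive integers. An $m\times n$ grid dissection of $ABCD$ is given by two families of segments $\mathcal S=\{s_1,\dots,s_{m-1}\}$ and $\mathcal T=\{t_1,\dots,t_{n-1}\}$ such that: each $s\in\mathcal S$ has one endpoint on side $AB$ and the other on side $CD$; each $t\in\mathcal T$ has one endpoint on side $AD$ and the other on side $BC$; the segments of $\mathcal S$ are pairwise disjoint, and the segments of $\mathcal T$ are pairwise disjoint. These segments cut $ABCD$ into $mn$ quadrilaterals. *)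

(* Defs.v *)
From Stdlib Require Import Reals Lra Lia.
Open Scope R_scope.

Definition pt := (R * R)%type.

(* Twice the signed area of triangle (o, a, b): > 0 iff o, a, b turn counterclockwise. *)
Definition cross (o a b : pt) : R :=
  (fst a - fst o) * (snd b - snd o) - (snd a - snd o) * (fst b - fst o).

Definition dist (p q : pt) : R :=
  sqrt ((fst p - fst q) ^ 2 + (snd p - snd q) ^ 2).

Definition lerp (X Y : pt) (t : R) : pt :=
  (fst X + t * (fst Y - fst X), snd X + t * (snd Y - snd X)).

Definition on_seg (P X Y : pt) : Prop :=
  exists t, 0 <= t <= 1 /\ P = lerp X Y t.

(* ABCD (vertices in cyclic order) is a convex quadrilateral: all four turns
   strictly in the same direction (for 4 vertices this forces a simple convex polygon). *)
Definition convex_quad (A B C D : pt) : Prop :=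
  (0 < cross A B C /\ 0 < cross B C D /\ 0 < cross C D A /\ 0 < cross D A B) \/
  (cross A B C < 0 /\ cross B C D < 0 /\ cross C D A < 0 /\ cross D A B < 0).

Definition in_quad (A B C D P : pt) : Prop :=
  (0 <= cross A B P /\ 0 <= cross B C P /\ 0 <= cross C D P /\ 0 <= cross D A P) \/
  (cross A B P <= 0 /\ cross B C P <= 0 /\ cross C D P <= 0 /\ cross D A P <= 0).

Definition touches_side (O : pt) (r : R) (X Y : pt) : Prop :=
  exists T, on_seg T X Y /\ dist O T = r.

(* Circle (O, r) is inscribed in ABCD: it lies in the quadrilateral
   (its closed disk is contained in ABCD) and touches all four sides;
   a circle inside a convex region touching a side is tangent to it. *)
Definition inscribed_circle (A B C D O : pt) (r : R) : Prop :=
  0 < r /\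
  (forall P, dist O P <= r -> in_quad A B C D P) /\
  touches_side O r A B /\ touches_side O r B C /\
  touches_side O r C D /\ touches_side O r D A.

Definition tangential (A B C D : pt) : Prop :=
  convex_quad A B C D /\ exists O r, inscribed_circle A B C D O r.

(* An m x n grid dissection of ABCD.
   s_i (0 <= i <= m) is the segment from lerp A B (a i) on AB to lerp D C (a' i) on DC;
   s_0 = AD, s_m = BC, and s_1..s_{m-1} are the family S.
   t_j (0 <= j <= n) is the segment from lerp A D (b j) on AD to lerp B C (b' j) on BC;
   t_0 = AB, t_n = DC, and t_1..t_{n-1} are the family T.
   Strictly increasing parameters = the segments of each family are pairwise
   disjoint (and distinct from the sides).  X i j is the crossing point of s_i and t_j;
   the cells are the quadrilaterals X i j, X (i+1) j, X (i+1) (j+1), X i (j+1). *)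
Definition grid_dissection (m n : nat) (A B C D : pt)
    (a a' b b' : nat -> R) (X : nat -> nat -> pt) : Prop :=
  a 0%nat = 0 /\ a m = 1 /\ a' 0%nat = 0 /\ a' m = 1 /\
  (forall i, (i < m)%nat -> a i < a (S i) /\ a' i < a' (S i)) /\
  b 0%nat = 0 /\ b n = 1 /\ b' 0%nat = 0 /\ b' n = 1 /\
  (forall j, (j < n)%nat -> b j < b (S j) /\ b' j < b' (S j)) /\
  (forall i j, (i <= m)%nat -> (j <= n)%nat ->
     on_seg (X i j) (lerp A B (a i)) (lerp D C (a' i)) /\
     on_seg (X i j) (lerp A D (b j)) (lerp B C (b' j))).

(* Main.v *)
Require Import Defs.
From Stdlib Require Import Reals.
From Stdlib Require Import Lra Lia Psatz.
Import Defs.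
Open Scope R_scope.

Definition cr (v w : pt) : R := fst v * snd w - snd v * fst w.
Definition vsub (p q : pt) : pt := (fst p - fst q, snd p - snd q).
Definition sq (v : pt) : R := fst v * fst v + snd v * snd v.

Lemma cross_cr o a b : cross o a b = cr (vsub a o) (vsub b o).
Proof. reflexivity. Qed.

Lemma dist_sq p q : dist p q = sqrt (sq (vsub p q)).
Proof. unfold dist, sq, vsub; simpl. f_equal; ring. Qed.

Lemma dist_sym p q : dist p q = dist q p.
Proof. unfold dist. f_equal; ring. Qed.

Lemma sq_ge0 v : 0 <= sq v.
Proof. unfold sq; nra. Qed.

Lemma dist_pos p q : p <> q -> 0 < dist p q.
Proof.
  intros H. rewrite dist_sq. apply sqrt_lt_R0.
  destruct p as [p1 p2], q as [q1 q2]; unfold sq, vsub; simpl.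
  destruct (Req_dec p1 q1); destruct (Req_dec p2 q2); subst.
  - exfalso; auto.
  - assert (p2 - q2 <> 0) by lra. nra.
  - assert (p1 - q1 <> 0) by lra. nra.
  - assert (p1 - q1 <> 0) by lra. nra.
Qed.

Lemma dist_sqr p q : dist p q * dist p q = sq (vsub p q).
Proof. rewrite dist_sq. apply sqrt_sqrt, sq_ge0. Qed.

Lemma dist_ge0 p q : 0 <= dist p q.
Proof. rewrite dist_sq. apply sqrt_pos. Qed.

Lemma cr_bound v w : Rabs (cr v w) <= sqrt (sq v) * sqrt (sq w).
Proof.
  rewrite <- (sqrt_mult (sq v) (sq w) (sq_ge0 v) (sq_ge0 w)).
  rewrite <- sqrt_Rsqr_abs. apply sqrt_le_1_alt.
  destruct v as [a b], w as [c d]. unfold Rsqr, cr, sq; simpl.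
  pose proof (Rle_0_sqr (a*c+b*d)); unfold Rsqr in *; nra.
Qed.

Lemma Rabs_le_between a b : Rabs a <= b -> - b <= a <= b.
Proof.
  intros H. destruct (Rle_dec 0 a).
  - rewrite Rabs_right in H by lra. lra.
  - rewrite Rabs_left in H by lra. lra.
Qed.

Lemma cross_cyc o a b : cross o a b = cross a b o.
Proof. unfold cross; ring. Qed.

Lemma quad_sum A B C D P :
  cross A B P + cross B C P + cross C D P + cross D A P = cross A B C + cross A C D.
Proof. unfold cross; ring. Qed.

Definition core_tang (P1 P2 P3 P4 : pt) : Prop :=
  exists s O r, (s = 1 \/ s = -1) /\ 0 < r /\
   0 < s * cross P1 P2 P3 /\ 0 < s * cross P2 P3 P4 /\
   0 < s * cross P3 P4 P1 /\ 0 < s * cross P4 P1 P2 /\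
   cross P1 P2 O = s * r * dist P1 P2 /\ cross P2 P3 O = s * r * dist P2 P3 /\
   cross P3 P4 O = s * r * dist P3 P4 /\ cross P4 P1 O = s * r * dist P4 P1.

Lemma side_in s r (X Y O P : pt) : (s = 1 \/ s = -1) -> 0 < r ->
  cross X Y O = s * r * dist X Y -> dist O P <= r -> 0 <= s * cross X Y P.
Proof.
  intros Hs Hr H Hd.
  assert (E : cross X Y P = cross X Y O + cr (vsub Y X) (vsub P O))
    by (unfold cross, cr, vsub; simpl; ring).
  rewrite E, H.
  pose proof (cr_bound (vsub Y X) (vsub P O)) as Hb.
  rewrite <- !dist_sq in Hb. rewrite (dist_sym P O) in Hb.
  pose proof (dist_ge0 Y X). rewrite (dist_sym Y X) in *.
  assert (dist X Y * dist O P <= dist X Y * r) by (apply Rmult_le_compat_l; lra).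
  destruct Hs; subst s; apply Rabs_le_between in Hb; nra.
Qed.

Lemma side_touch s r (W X Y Z O : pt) : (s = 1 \/ s = -1) -> 0 < r ->
  0 < s * cross W X Y -> 0 < s * cross X Y Z ->
  (forall P, dist O P <= r -> 0 <= s * cross W X P /\ 0 <= s * cross Y Z P) ->
  cross X Y O = s * r * dist X Y -> touches_side O r X Y.
Proof.
  intros Hs Hr H1 H2 Hin H.
  set (v := vsub Y X). set (w := vsub O X).
  assert (Hxy : X <> Y).
  { intro E; subst Y. unfold cross in H2. destruct Hs; subst; nra. }
  assert (HL : 0 < sq v).
  { pose proof (dist_pos _ _ Hxy). pose proof (dist_sqr X Y).
    assert (sq v = sq (vsub X Y)) by (unfold v, sq, vsub; simpl; ring).
    nra. }
  set (tau := (fst v * fst w + snd v * snd w) / sq v).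
  set (T := lerp X Y tau).
  assert (HOT : dist O T = r).
  { assert (Hc : cross X Y O = cr v w) by reflexivity.
    assert (Hd2 : dist X Y * dist X Y = sq v).
    { rewrite dist_sqr. unfold v, sq, vsub; simpl; ring. }
    rewrite dist_sq. 
    assert (E : sq (vsub O T) = (cr v w) * (cr v w) / sq v).
    { unfold T, lerp, tau, sq, vsub, cr. simpl. unfold v, w, vsub, sq in *; simpl in *.
      field. lra. }
    rewrite E, <- Hc, H.
    replace (s * r * dist X Y * (s * r * dist X Y) / sq v) with (r * r).
    - rewrite sqrt_square; lra.
    - rewrite <- Hd2. assert (s * s = 1) by (destruct Hs; subst; lra).
      field_simplify_eq. nra. pose proof (dist_pos _ _ Hxy); lra. }
  exists T. split; [|exact HOT].
  exists tau. split; [|reflexivity].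
  destruct (Hin T) as [Ha Hb]; [lra|].
  assert (E1 : cross W X T = tau * cross W X Y) by (unfold T, lerp, cross; simpl; ring).
  assert (E2 : cross Y Z T = (1 - tau) * cross X Y Z) by (unfold T, lerp, cross; simpl; ring).
  rewrite E1 in Ha. rewrite E2 in Hb.
  destruct Hs; subst s; split; nra.
Qed.

Lemma core_tang_tangential P1 P2 P3 P4 : core_tang P1 P2 P3 P4 -> tangential P1 P2 P3 P4.
Proof.
  intros (s & O & r & Hs & Hr & H1 & H2 & H3 & H4 & E1 & E2 & E3 & E4).
  assert (Hin : forall P, dist O P <= r ->
     0 <= s * cross P1 P2 P /\ 0 <= s * cross P2 P3 P /\ 0 <= s * cross P3 P4 P /\ 0 <= s * cross P4 P1 P).
  { intros P HP. split; [|split; [|split]].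
    - exact (side_in s r _ _ _ _ Hs Hr E1 HP).
    - exact (side_in s r _ _ _ _ Hs Hr E2 HP).
    - exact (side_in s r _ _ _ _ Hs Hr E3 HP).
    - exact (side_in s r _ _ _ _ Hs Hr E4 HP). }
  split.
  - destruct Hs; subst s; [left|right]; repeat split; lra.
  - exists O, r. split; [exact Hr|]. split.
    + intros P HP. destruct (Hin P HP) as (a & b & c & d).
      destruct Hs; subst s; [left|right]; repeat split; lra.
    + repeat split.
      * eapply (side_touch s r P4 P1 P2 P3); eauto; try (rewrite cross_cyc, cross_cyc; auto);
        intros P HP; destruct (Hin P HP) as (?&?&?&?); auto.
      * eapply (side_touch s r P1 P2 P3 P4); eauto;
        intros P HP; destruct (Hin P HP) as (?&?&?&?); auto.
      * eapply (side_touch s r P2 P3 P4 P1); eauto;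
        intros P HP; destruct (Hin P HP) as (?&?&?&?); auto.
      * eapply (side_touch s r P3 P4 P1 P2); eauto;
        intros P HP; destruct (Hin P HP) as (?&?&?&?); auto.
Qed.

Lemma side_eq s r (X Y O : pt) : (s = 1 \/ s = -1) -> 0 < r -> X <> Y ->
  (forall P, dist O P <= r -> 0 <= s * cross X Y P) ->
  touches_side O r X Y -> cross X Y O = s * r * dist X Y.
Proof.
  intros Hs Hr Hxy Hin (T & (tau & Ht & ET) & HT).
  pose proof (dist_pos _ _ Hxy) as Hd.
  set (v := vsub Y X). set (L := dist X Y).
  assert (HL : L * L = sq v) by (unfold L, v; rewrite dist_sqr; unfold sq, vsub; simpl; ring).
  set (P := (fst O + s * r / L * snd v, snd O - s * r / L * fst v)).
  assert (HP : dist O P = r).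
  { rewrite dist_sq.
    assert (E : sq (vsub O P) = (s*r/L)*(s*r/L)*sq v) by (unfold P, sq, vsub; simpl; ring).
    rewrite E, <- HL. assert (s*s = 1) by (destruct Hs; subst; lra).
    replace (s * r / L * (s * r / L) * (L * L)) with (r*r).
    - rewrite sqrt_square; lra.
    - rewrite <- (Rmult_1_l (r*r)) at 1. rewrite <- H. field. unfold L; lra. }
  assert (Hlow := Hin P (Req_le _ _ HP)).
  assert (EP : cross X Y P = cross X Y O - s * r * L).
  { unfold P, cross. simpl. 
    replace (s * r * L) with (s * r / L * (L * L)) by (field; unfold L; lra).
    rewrite HL. unfold v, sq, vsub; simpl. ring. }
  rewrite EP in Hlow.
  assert (EO : cross X Y O = cr v (vsub O T)).
  { rewrite ET. unfold v, cross, cr, vsub, lerp; simpl. ring. }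
  pose proof (cr_bound v (vsub O T)) as Hb.
  rewrite <- dist_sq in Hb. 
  assert (sqrt (sq v) = L) by (unfold L, v; rewrite dist_sq; f_equal; unfold sq, vsub; simpl; ring).
  rewrite H, HT, <- EO in Hb. apply Rabs_le_between in Hb.
  destruct Hs; subst s; nra.
Qed.

Lemma tangential_core A B C D : tangential A B C D -> core_tang A B C D.
Proof.
  intros [Hc (O & r & Hr & Hdisk & T1 & T2 & T3 & T4)].
  assert (Hs : exists s, (s = 1 \/ s = -1) /\ 0 < s * cross A B C /\ 0 < s * cross B C D /\
     0 < s * cross C D A /\ 0 < s * cross D A B).
  { destruct Hc as [(h1&h2&h3&h4)|(h1&h2&h3&h4)]; [exists 1|exists (-1)]; repeat split; lra. }
  destruct Hs as (s & Hs & h1 & h2 & h3 & h4).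
  assert (Hin : forall P, dist O P <= r ->
     0 <= s * cross A B P /\ 0 <= s * cross B C P /\ 0 <= s * cross C D P /\ 0 <= s * cross D A P).
  { intros P HP. pose proof (quad_sum A B C D P) as Sm.
    assert (cross A C D = cross C D A) by (unfold cross; ring).
    destruct (Hdisk P HP) as [(a&b&c&d)|(a&b&c&d)]; destruct Hs; subst s;
      repeat split; nra. }
  assert (Hne : forall X Y Z, 0 < s * cross X Y Z -> X <> Y).
  { intros X Y Z H E; subst; unfold cross in H; nra. }
  exists s, O, r. repeat split; auto.
  - apply side_eq; eauto. intros P HP; apply Hin; auto.
  - apply side_eq; eauto. intros P HP; apply Hin; auto.
  - apply side_eq; eauto. intros P HP; apply Hin; auto.
  - apply side_eq; eauto. intros P HP; apply Hin; auto.
Qed.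

Lemma core_tang_rev P1 P2 P3 P4 : core_tang P1 P2 P3 P4 -> core_tang P1 P4 P3 P2.
Proof.
  intros (s & O & r & Hs & Hr & H1 & H2 & H3 & H4 & E1 & E2 & E3 & E4).
  exists (-s), O, r. 
  assert (F : forall X Y Z, cross X Y Z = - cross Z Y X) by (intros; unfold cross; ring).
  assert (G : forall X Y, cross X Y O = - cross Y X O) by (intros; unfold cross; ring).
  repeat split.
  - destruct Hs; subst; lra.
  - exact Hr.
  - rewrite F; lra.
  - rewrite F; lra.
  - rewrite F; lra.
  - rewrite F; lra.
  - rewrite G, E4, dist_sym; ring.
  - rewrite G, E3, dist_sym; ring.
  - rewrite G, E2, dist_sym; ring.
  - rewrite G, E1, dist_sym; ring.
Qed.

Definition pl (P : pt) (a : R) (d : pt) : pt := (fst P + a * fst d, snd P + a * snd d).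

Lemma cross_line P a b d Z : cross (pl P a d) (pl P b d) Z = (b - a) * cr d (vsub Z P).
Proof. unfold cross, pl, cr, vsub; simpl; ring. Qed.

Lemma dist_line P a b d : dist (pl P a d) (pl P b d) = Rabs (b - a) * sqrt (sq d).
Proof.
  rewrite dist_sq. replace (sq (vsub (pl P a d) (pl P b d))) with (Rsqr (b - a) * sq d)
    by (unfold Rsqr, sq, vsub, pl; simpl; ring).
  rewrite sqrt_mult by (apply Rle_0_sqr || apply sq_ge0). rewrite sqrt_Rsqr_abs. reflexivity.
Qed.

Lemma cr_pl d P a w : cr d (vsub (pl P a w) P) = a * cr d w.
Proof. unfold cr, vsub, pl; simpl; ring. Qed.

Lemma sgn_help k p : k <> 0 -> 0 < p ->
  0 < (k / Rabs k) * (k * p).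
Proof.
  intros Hk Hp. destruct (Rle_dec 0 k).
  - rewrite Rabs_right by lra. assert (0 < k) by lra.
    replace (k / k * (k * p)) with (k * p) by (field; lra). nra.
  - rewrite Rabs_left by lra.
    replace (k / - k * (k * p)) with (- k * p) by (field; lra). nra.
Qed.

Lemma sgn_help2 k p a b : k <> 0 -> 0 < p -> a * b = k * p ->
  a * b = (k / Rabs k) * Rabs a * Rabs b.
Proof.
  intros Hk Hp E. rewrite Rmult_assoc, <- Rabs_mult, E, Rabs_mult.
  rewrite (Rabs_right p) by lra. field. apply Rabs_no_R0; auto.
Qed.

Lemma sgn_pm k : k <> 0 -> k / Rabs k = 1 \/ k / Rabs k = -1.
Proof.
  intros Hk. destruct (Rle_dec 0 k).
  - left. rewrite Rabs_right by lra. field; lra.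
  - right. rewrite Rabs_left by lra. field; lra.
Qed.

Definition Fp : pt := (-1, 0).
Definition Ep : pt := (1, 0).
Definition dF (t : R) : pt := (1 - t * t, 2 * t).
Definition dE (u : R) : pt := (- (1 - u * u), 2 * u).
Definition lam (t u : R) : R := 2 * u / ((t + u) * (1 - t * u)).
Definition mu (t u : R) : R := 2 * t / ((t + u) * (1 - t * u)).
Definition Lp (t u : R) : pt := pl Fp (lam t u) (dF t).

Definition okL (t u : R) : Prop := 0 < t /\ 0 < u /\ t * u < 1.

Lemma Lp_E t u : okL t u -> Lp t u = pl Ep (mu t u) (dE u).
Proof.
  intros (h1 & h2 & h3). unfold Lp, pl, Fp, Ep, lam, mu, dF, dE; simpl.
  f_equal; field; split; nra.
Qed.

Lemma sq_dF t : sqrt (sq (dF t)) = 1 + t * t.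
Proof.
  replace (sq (dF t)) with ((1 + t*t) * (1 + t*t)) by (unfold sq, dF; simpl; ring).
  apply sqrt_square. nra.
Qed.

Lemma sq_dE u : sqrt (sq (dE u)) = 1 + u * u.
Proof.
  replace (sq (dE u)) with ((1 + u*u) * (1 + u*u)) by (unfold sq, dE; simpl; ring).
  apply sqrt_square. nra.
Qed.

Lemma mu_diff t t' u : okL t u -> okL t' u ->
  mu t' u - mu t u = (t' - t) * (2 * u * (1 + t * t') / (((t + u) * (1 - t * u)) * ((t' + u) * (1 - t' * u)))).
Proof. intros (a&b&c) (d&e&f). unfold mu. field. split; nra. Qed.

Lemma lam_diff t u u' : okL t u -> okL t u' ->
  lam t u' - lam t u = (u' - u) * (2 * t * (1 + u * u') / (((t + u) * (1 - t * u)) * ((t + u') * (1 - t * u')))).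
Proof. intros (a&b&c) (d&e&f). unfold lam. field. split; nra. Qed.

Lemma pos_frac t t' u : okL t u -> okL t' u ->
  0 < 2 * u * (1 + t * t') / (((t + u) * (1 - t * u)) * ((t' + u) * (1 - t' * u))).
Proof.
  intros (a&b&c) (d&e&f). apply Rdiv_lt_0_compat.
  - assert (0 < t * t') by nra. nra.
  - assert (0 < (t + u) * (1 - t * u)) by nra. assert (0 < (t' + u) * (1 - t' * u)) by nra. nra.
Qed.

Lemma pos_frac' t u u' : okL t u -> okL t u' ->
  0 < 2 * t * (1 + u * u') / (((t + u) * (1 - t * u)) * ((t + u') * (1 - t * u'))).
Proof.
  intros (a&b&c) (d&e&f). apply Rdiv_lt_0_compat.
  - assert (0 < u * u') by nra. nra.
  - assert (0 < (t + u) * (1 - t * u)) by nra. assert (0 < (t + u') * (1 - t * u')) by nra. nra.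
Qed.

Lemma mu_pos t u : okL t u -> 0 < mu t u.
Proof. intros (a&b&c). unfold mu. apply Rdiv_lt_0_compat; nra. Qed.
Lemma lam_pos t u : okL t u -> 0 < lam t u.
Proof. intros (a&b&c). unfold lam. apply Rdiv_lt_0_compat; nra. Qed.

Lemma cr_dE u1 u2 : cr (dE u1) (dE u2) = 2 * (u1 - u2) * (1 + u1 * u2).
Proof. unfold cr, dE; simpl; ring. Qed.
Lemma cr_dF t1 t2 : cr (dF t1) (dF t2) = 2 * (t2 - t1) * (1 + t1 * t2).
Proof. unfold cr, dF; simpl; ring. Qed.

Definition wF (t1 t2 : R) : pt := (1 - t1 * t2, t1 + t2).
Definition wE (u1 u2 : R) : pt := (- (1 - u1 * u2), u1 + u2).
Lemma cr_dF_wF t1 t2 : cr (dF t1) (wF t1 t2) = (t2 - t1) * (1 + t1 * t1).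
Proof. unfold cr, dF, wF; simpl; ring. Qed.
Lemma cr_dF_wF' t1 t2 : cr (dF t2) (wF t1 t2) = (t1 - t2) * (1 + t2 * t2).
Proof. unfold cr, dF, wF; simpl; ring. Qed.
Lemma cr_dE_wE u1 u2 : cr (dE u1) (wE u1 u2) = (u1 - u2) * (1 + u1 * u1).
Proof. unfold cr, dE, wE; simpl; ring. Qed.
Lemma cr_dE_wE' u1 u2 : cr (dE u2) (wE u1 u2) = (u2 - u1) * (1 + u2 * u2).
Proof. unfold cr, dE, wE; simpl; ring. Qed.

Definition Den (t1 t2 u1 u2 : R) := (u1 + u2) * (1 - t1 * t2) + (t1 + t2) * (1 - u1 * u2).
Lemma Den_pos t1 t2 u1 u2 : okL t1 u1 -> okL t2 u2 -> 0 < Den t1 t2 u1 u2.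
Proof.
  intros (a&b&c) (d&e&f).
  replace (Den t1 t2 u1 u2) with ((t1 + u1) * (1 - t2 * u2) + (t2 + u2) * (1 - t1 * u1))
    by (unfold Den; ring). nra.
Qed.

Definition lamo t1 t2 u1 u2 := 2 * (u1 + u2) / Den t1 t2 u1 u2.
Definition muo t1 t2 u1 u2 := 2 * (t1 + t2) / Den t1 t2 u1 u2.
Lemma O_eq t1 t2 u1 u2 : okL t1 u1 -> okL t2 u2 ->
  pl Fp (lamo t1 t2 u1 u2) (wF t1 t2) = pl Ep (muo t1 t2 u1 u2) (wE u1 u2).
Proof.
  intros H1 H2. pose proof (Den_pos _ _ _ _ H1 H2).
  unfold pl, Fp, Ep, lamo, muo, wF, wE; simpl. unfold Den in *.
  f_equal; field; lra.
Qed.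

Lemma abs_mul_pos a b : 0 < a -> Rabs (a * b) = a * Rabs b.
Proof. intros. rewrite Rabs_mult, Rabs_right by lra. ring. Qed.

Lemma Hr_L t1 t2 u1 u2 : okL t1 u1 -> okL t2 u2 -> okL t1 u2 -> okL t2 u1 ->
  (t2 * u1 = t1 * u2 \/ t2 * u2 = t1 * u1) ->
  lamo t1 t2 u1 u2 * Rabs (t2 - t1) = muo t1 t2 u1 u2 * Rabs (u1 - u2).
Proof.
  intros H1 H2 H3 H4 Hc. pose proof (Den_pos _ _ _ _ H1 H2) as HD.
  destruct H1 as (a&b&c), H2 as (d&e&f).
  unfold lamo, muo. unfold Rdiv.
  replace (2 * (u1 + u2) * / Den t1 t2 u1 u2 * Rabs (t2 - t1)) with
    (2 * / Den t1 t2 u1 u2 * Rabs ((u1 + u2) * (t2 - t1)))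
    by (rewrite abs_mul_pos by lra; ring).
  replace (2 * (t1 + t2) * / Den t1 t2 u1 u2 * Rabs (u1 - u2)) with
    (2 * / Den t1 t2 u1 u2 * Rabs ((t1 + t2) * (u1 - u2)))
    by (rewrite abs_mul_pos by lra; ring).
  destruct Hc as [Hc|Hc].
  - replace ((u1 + u2) * (t2 - t1)) with (- ((t1 + t2) * (u1 - u2))) by nra.
    rewrite Rabs_Ropp. reflexivity.
  - replace ((u1 + u2) * (t2 - t1)) with ((t1 + t2) * (u1 - u2)) by nra. reflexivity.
Qed.

Lemma cellL t1 t2 u1 u2 : okL t1 u1 -> okL t2 u1 -> okL t2 u2 -> okL t1 u2 ->
  t1 <> t2 -> u1 <> u2 -> (t2 * u1 = t1 * u2 \/ t2 * u2 = t1 * u1) ->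
  core_tang (Lp t1 u1) (Lp t2 u1) (Lp t2 u2) (Lp t1 u2).
Proof.
  intros H11 H21 H22 H12 Ht Hu Hc.
  set (k := (t2 - t1) * (u1 - u2)).
  assert (Hk : k <> 0) by (unfold k; intro E; apply Rmult_integral in E; destruct E; lra).
  set (s := k / Rabs k).
  pose proof (Hr_L _ _ _ _ H11 H22 H12 H21 Hc) as Hr.
  assert (Hmo : 0 < muo t1 t2 u1 u2).
  { unfold muo. pose proof (Den_pos _ _ _ _ H11 H22). destruct H11, H22. apply Rdiv_lt_0_compat; lra. }
  assert (Hlo : 0 < lamo t1 t2 u1 u2).
  { unfold lamo. pose proof (Den_pos _ _ _ _ H11 H22). destruct H11 as (?&?&?), H22 as (?&?&?).
    apply Rdiv_lt_0_compat; lra. }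
  assert (HOE := O_eq _ _ _ _ H11 H22).
  set (O := pl Ep (muo t1 t2 u1 u2) (wE u1 u2)).
  exists s, O, (muo t1 t2 u1 u2 * Rabs (u1 - u2)).
  split; [apply sgn_pm; auto|].
  split; [apply Rmult_lt_0_compat; [lra| apply Rabs_pos_lt; lra]|].
  pose proof (Lp_E _ _ H11) as e11. pose proof (Lp_E _ _ H21) as e21.
  pose proof (Lp_E _ _ H22) as e22. pose proof (Lp_E _ _ H12) as e12.
  pose proof (mu_diff _ _ _ H11 H21) as md1.
  pose proof (mu_diff _ _ _ H12 H22) as md2.
  pose proof (lam_diff _ _ _ H11 H12) as ld1.
  pose proof (lam_diff _ _ _ H21 H22) as ld2.
  pose proof (pos_frac _ _ _ H11 H21) as pf1.
  pose proof (pos_frac _ _ _ H12 H22) as pf2.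
  pose proof (pos_frac' _ _ _ H11 H12) as pg1.
  pose proof (pos_frac' _ _ _ H21 H22) as pg2.
  pose proof (mu_pos _ _ H11). pose proof (mu_pos _ _ H12). pose proof (mu_pos _ _ H21). pose proof (mu_pos _ _ H22).
  pose proof (lam_pos _ _ H11). pose proof (lam_pos _ _ H12). pose proof (lam_pos _ _ H21). pose proof (lam_pos _ _ H22).
  assert (p1 : 0 < 1 + u1 * u2) by (destruct H11 as (?&?&?), H22 as (?&?&?); nra).
  assert (p2 : 0 < 1 + t1 * t2) by (destruct H11 as (?&?&?), H22 as (?&?&?); nra).
  split; [| split; [|split; [|split]]].
  -
    rewrite e11, e21, e22, cross_line, cr_pl, cr_dE, md1. unfold s.
    replace ((t2 - t1) * (2 * u1 * (1 + t1 * t2) / ((t1 + u1) * (1 - t1 * u1) * ((t2 + u1) * (1 - t2 * u1)))) *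
      (mu t2 u2 * (2 * (u1 - u2) * (1 + u1 * u2)))) with
      (k * ((2 * u1 * (1 + t1 * t2) / ((t1 + u1) * (1 - t1 * u1) * ((t2 + u1) * (1 - t2 * u1)))) * (mu t2 u2 * (2 * (1 + u1 * u2)))))
      by (unfold k; ring).
    apply sgn_help; auto. apply Rmult_lt_0_compat; [lra|]. apply Rmult_lt_0_compat; lra.
  -
    unfold Lp. rewrite cross_line, cr_pl, cr_dF, ld2. unfold s.
    replace ((u2 - u1) * (2 * t2 * (1 + u1 * u2) / ((t2 + u1) * (1 - t2 * u1) * ((t2 + u2) * (1 - t2 * u2)))) *
      (lam t1 u2 * (2 * (t1 - t2) * (1 + t2 * t1)))) with
      (k * ((2 * t2 * (1 + u1 * u2) / ((t2 + u1) * (1 - t2 * u1) * ((t2 + u2) * (1 - t2 * u2)))) * (lam t1 u2 * (2 * (1 + t1 * t2)))))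
      by (unfold k; ring).
    apply sgn_help; auto. apply Rmult_lt_0_compat; [lra|]. apply Rmult_lt_0_compat; lra.
  -
    rewrite e11, e22, e12, cross_line, cr_pl, cr_dE.
    replace (mu t1 u2 - mu t2 u2) with (- (mu t2 u2 - mu t1 u2)) by ring. rewrite md2. unfold s.
    replace (- ((t2 - t1) * (2 * u2 * (1 + t1 * t2) / ((t1 + u2) * (1 - t1 * u2) * ((t2 + u2) * (1 - t2 * u2))))) *
      (mu t1 u1 * (2 * (u2 - u1) * (1 + u2 * u1)))) with
      (k * ((2 * u2 * (1 + t1 * t2) / ((t1 + u2) * (1 - t1 * u2) * ((t2 + u2) * (1 - t2 * u2)))) * (mu t1 u1 * (2 * (1 + u1 * u2)))))
      by (unfold k; ring).
    apply sgn_help; auto. apply Rmult_lt_0_compat; [lra|]. apply Rmult_lt_0_compat; lra.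
  -
    unfold Lp. rewrite cross_line, cr_pl, cr_dF.
    replace (lam t1 u1 - lam t1 u2) with (- (lam t1 u2 - lam t1 u1)) by ring. rewrite ld1. unfold s.
    replace (- ((u2 - u1) * (2 * t1 * (1 + u1 * u2) / ((t1 + u1) * (1 - t1 * u1) * ((t1 + u2) * (1 - t1 * u2))))) *
      (lam t2 u1 * (2 * (t2 - t1) * (1 + t1 * t2)))) with
      (k * ((2 * t1 * (1 + u1 * u2) / ((t1 + u1) * (1 - t1 * u1) * ((t1 + u2) * (1 - t1 * u2)))) * (lam t2 u1 * (2 * (1 + t1 * t2)))))
      by (unfold k; ring).
    apply sgn_help; auto. apply Rmult_lt_0_compat; [lra|]. apply Rmult_lt_0_compat; lra.
  - assert (HOF : O = pl Fp (lamo t1 t2 u1 u2) (wF t1 t2)) by (unfold O; rewrite HOE; reflexivity).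
    split; [|split; [|split]].
    + rewrite e11, e21, cross_line. unfold O. rewrite cr_pl, cr_dE_wE, dist_line, sq_dE.
      assert (Hab : (mu t2 u1 - mu t1 u1) * (u1 - u2) = s * Rabs (mu t2 u1 - mu t1 u1) * Rabs (u1 - u2)).
      { apply (sgn_help2 k (2 * u1 * (1 + t1 * t2) / ((t1 + u1) * (1 - t1 * u1) * ((t2 + u1) * (1 - t2 * u1))))); auto.
        rewrite md1. unfold k. ring. }
      replace ((mu t2 u1 - mu t1 u1) * (muo t1 t2 u1 u2 * ((u1 - u2) * (1 + u1 * u1)))) with
        ((mu t2 u1 - mu t1 u1) * (u1 - u2) * (muo t1 t2 u1 u2 * (1 + u1 * u1))) by ring.
      rewrite Hab. ring.
    + rewrite HOF. unfold Lp. rewrite cross_line, cr_pl, cr_dF_wF', dist_line, sq_dF, <- Hr.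
      assert (Hab : (lam t2 u2 - lam t2 u1) * (t1 - t2) = s * Rabs (lam t2 u2 - lam t2 u1) * Rabs (t1 - t2)).
      { apply (sgn_help2 k (2 * t2 * (1 + u1 * u2) / ((t2 + u1) * (1 - t2 * u1) * ((t2 + u2) * (1 - t2 * u2))))); auto.
        rewrite ld2. unfold k. ring. }
      replace ((lam t2 u2 - lam t2 u1) * (lamo t1 t2 u1 u2 * ((t1 - t2) * (1 + t2 * t2)))) with
        ((lam t2 u2 - lam t2 u1) * (t1 - t2) * (lamo t1 t2 u1 u2 * (1 + t2 * t2))) by ring.
      rewrite Hab, (Rabs_minus_sym t1 t2). ring.
    + rewrite e22, e12, cross_line. unfold O. rewrite cr_pl, cr_dE_wE', dist_line, sq_dE.
      assert (Hab : (mu t1 u2 - mu t2 u2) * (u2 - u1) = s * Rabs (mu t1 u2 - mu t2 u2) * Rabs (u2 - u1)).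
      { apply (sgn_help2 k (2 * u2 * (1 + t1 * t2) / ((t1 + u2) * (1 - t1 * u2) * ((t2 + u2) * (1 - t2 * u2))))); auto.
        replace (mu t1 u2 - mu t2 u2) with (- (mu t2 u2 - mu t1 u2)) by ring.
        rewrite md2. unfold k. ring. }
      replace ((mu t1 u2 - mu t2 u2) * (muo t1 t2 u1 u2 * ((u2 - u1) * (1 + u2 * u2)))) with
        ((mu t1 u2 - mu t2 u2) * (u2 - u1) * (muo t1 t2 u1 u2 * (1 + u2 * u2))) by ring.
      rewrite Hab, (Rabs_minus_sym u2 u1). ring.
    + rewrite HOF. unfold Lp. rewrite cross_line, cr_pl, cr_dF_wF, dist_line, sq_dF, <- Hr.
      assert (Hab : (lam t1 u1 - lam t1 u2) * (t2 - t1) = s * Rabs (lam t1 u1 - lam t1 u2) * Rabs (t2 - t1)).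
      { apply (sgn_help2 k (2 * t1 * (1 + u1 * u2) / ((t1 + u1) * (1 - t1 * u1) * ((t1 + u2) * (1 - t1 * u2))))); auto.
        replace (lam t1 u1 - lam t1 u2) with (- (lam t1 u2 - lam t1 u1)) by ring.
        rewrite ld1. unfold k. ring. }
      replace ((lam t1 u1 - lam t1 u2) * (lamo t1 t2 u1 u2 * ((t2 - t1) * (1 + t1 * t1)))) with
        ((lam t1 u1 - lam t1 u2) * (t2 - t1) * (lamo t1 t2 u1 u2 * (1 + t1 * t1))) by ring.
      rewrite Hab. ring.
Qed.

Definition fr (M e : pt) (sg : R) (p : pt) : pt :=
  (fst M + fst p * fst e - sg * snd p * snd e, snd M + fst p * snd e + sg * snd p * fst e).

Lemma cross_fr M e sg p q r :
  cross (fr M e sg p) (fr M e sg q) (fr M e sg r) = sg * sq e * cross p q r.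
Proof. unfold cross, fr, sq; simpl; ring. Qed.

Lemma dist_fr M e sg p q : (sg = 1 \/ sg = -1) ->
  dist (fr M e sg p) (fr M e sg q) = sqrt (sq e) * dist p q.
Proof.
  intros Hs. rewrite !dist_sq, <- sqrt_mult by apply sq_ge0. f_equal.
  unfold sq, vsub, fr; simpl. destruct Hs; subst; ring.
Qed.

Lemma lerp_fr M e sg p q t : fr M e sg (lerp p q t) = lerp (fr M e sg p) (fr M e sg q) t.
Proof. unfold fr, lerp; simpl; f_equal; ring. Qed.

Lemma pl_lerp P d a0 an a : an <> a0 ->
  pl P a d = lerp (pl P a0 d) (pl P an d) ((a - a0) / (an - a0)).
Proof. intros H. unfold pl, lerp; simpl; f_equal; field; lra. Qed.

Lemma sq_pos e : e <> (0,0) -> 0 < sq e.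
Proof.
  intros H. destruct e as [x y]. unfold sq; simpl.
  destruct (Req_dec x 0); destruct (Req_dec y 0); subst; try (exfalso; auto; fail); nra.
Qed.

Lemma core_tang_fr M e sg P1 P2 P3 P4 : (sg = 1 \/ sg = -1) -> e <> (0,0) ->
  core_tang P1 P2 P3 P4 -> core_tang (fr M e sg P1) (fr M e sg P2) (fr M e sg P3) (fr M e sg P4).
Proof.
  intros Hs He (s & O & r & Hs' & Hr & H1 & H2 & H3 & H4 & E1 & E2 & E3 & E4).
  pose proof (sq_pos e He) as Hq. pose proof (sqrt_lt_R0 _ Hq) as Hq'.
  assert (Hqq : sqrt (sq e) * sqrt (sq e) = sq e) by (apply sqrt_sqrt; lra).
  exists (sg * s), (fr M e sg O), (r * sqrt (sq e)).
  assert (Hss : sg * sg = 1) by (destruct Hs; subst; lra).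
  repeat split.
  - destruct Hs, Hs'; subst; lra.
  - nra.
  - rewrite cross_fr. replace (sg * s * (sg * sq e * cross P1 P2 P3)) with ((sg*sg) * sq e * (s * cross P1 P2 P3)) by ring. rewrite Hss. nra.
  - rewrite cross_fr. replace (sg * s * (sg * sq e * cross P2 P3 P4)) with ((sg*sg) * sq e * (s * cross P2 P3 P4)) by ring. rewrite Hss. nra.
  - rewrite cross_fr. replace (sg * s * (sg * sq e * cross P3 P4 P1)) with ((sg*sg) * sq e * (s * cross P3 P4 P1)) by ring. rewrite Hss. nra.
  - rewrite cross_fr. replace (sg * s * (sg * sq e * cross P4 P1 P2)) with ((sg*sg) * sq e * (s * cross P4 P1 P2)) by ring. rewrite Hss. nra.
  - rewrite cross_fr, dist_fr by auto. rewrite E1. rewrite <- Hqq at 1. ring.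
  - rewrite cross_fr, dist_fr by auto. rewrite E2. rewrite <- Hqq at 1. ring.
  - rewrite cross_fr, dist_fr by auto. rewrite E3. rewrite <- Hqq at 1. ring.
  - rewrite cross_fr, dist_fr by auto. rewrite E4. rewrite <- Hqq at 1. ring.
Qed.

Definition einv (e : pt) (sg : R) : pt := (fst e / sq e, - sg * snd e / sq e).
Definition Minv (M e : pt) (sg : R) : pt :=
  (- (fst M * fst (einv e sg) - sg * snd M * snd (einv e sg)),
   - (fst M * snd (einv e sg) + sg * snd M * fst (einv e sg))).

Lemma fr_inv_l M e sg p : (sg = 1 \/ sg = -1) -> e <> (0,0) ->
  fr (Minv M e sg) (einv e sg) sg (fr M e sg p) = p.
Proof.
  intros Hs He. pose proof (sq_pos e He) as Hq. destruct e as [ex ey].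
  unfold fr, Minv, einv, sq in *; simpl in *.
  destruct p as [px py]; simpl. destruct Hs; subst; f_equal; field; lra.
Qed.

Lemma fr_inv_r M e sg P : (sg = 1 \/ sg = -1) -> e <> (0,0) ->
  fr M e sg (fr (Minv M e sg) (einv e sg) sg P) = P.
Proof.
  intros Hs He. pose proof (sq_pos e He) as Hq. destruct e as [ex ey].
  unfold fr, Minv, einv, sq in *; simpl in *.
  destruct P as [px py]; simpl. destruct Hs; subst; f_equal; field; lra.
Qed.

Lemma einv_nz e sg : (sg = 1 \/ sg = -1) -> e <> (0,0) -> einv e sg <> (0,0).
Proof.
  intros Hs He E. pose proof (sq_pos e He) as Hq. destruct e as [ex ey].
  unfold einv, sq in *; simpl in *. injection E as E1 E2.
  assert (ex = 0). { apply (f_equal (fun z => z * (ex*ex+ey*ey))) in E1.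
    field_simplify in E1; lra. }
  assert (ey = 0). { apply (f_equal (fun z => z * (ex*ex+ey*ey))) in E2.
    field_simplify in E2; [|lra]. destruct Hs; subst; lra. }
  subst. lra.
Qed.

Definition smono (n : nat) (f : nat -> R) : Prop :=
  (forall j, (j < n)%nat -> f j < f (S j)) \/ (forall j, (j < n)%nat -> f (S j) < f j).

Definition rt (n : nat) (f : nat -> R) (j : nat) : R := (f j - f 0%nat) / (f n - f 0%nat).

Lemma smono_lt n f : (forall j, (j < n)%nat -> f j < f (S j)) ->
  forall i j, (i < j)%nat -> (j <= n)%nat -> f i < f j.
Proof.
  intros H i j Hij. induction j as [|j IH]; [lia|].
  intros Hj. destruct (Nat.eq_dec i j) as [->|Hne].
  - apply H; lia.
  - apply Rlt_trans with (f j); [apply IH; lia| apply H; lia].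
Qed.

Lemma smono_le n f : (forall j, (j < n)%nat -> f j < f (S j)) ->
  forall i j, (i <= j)%nat -> (j <= n)%nat -> f i <= f j.
Proof.
  intros H i j Hij Hj. destruct (Nat.eq_dec i j) as [->|]; [lra|].
  left; apply (smono_lt n); auto; lia.
Qed.

Lemma smono_neg n f : (forall j, (j < n)%nat -> f (S j) < f j) ->
  forall j, (j < n)%nat -> (fun k => - f k) j < (fun k => - f k) (S j).
Proof. intros H j Hj; simpl; specialize (H j Hj); lra. Qed.

Lemma rt_neg n f j : rt n f j = rt n (fun k => - f k) j.
Proof.
  unfold rt. destruct (Req_dec (f n - f 0%nat) 0) as [E|E].
  - replace (- f n - - f 0%nat) with (- (f n - f 0%nat)) by ring. rewrite E.
    replace (-0) with 0 by ring. unfold Rdiv; rewrite Rinv_0; ring.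
  - field. split; lra.
Qed.

Lemma rt_props_inc n f : (1 <= n)%nat -> (forall j, (j < n)%nat -> f j < f (S j)) ->
  rt n f 0 = 0 /\ rt n f n = 1 /\ (forall j, (j < n)%nat -> rt n f j < rt n f (S j)) /\
  (forall j, (j <= n)%nat -> 0 <= rt n f j <= 1).
Proof.
  intros Hn H. assert (Hd : f 0%nat < f n) by (apply (smono_lt n); auto; lia).
  unfold rt. split; [|split; [|split]].
  - unfold Rdiv; rewrite Rminus_diag; ring.
  - field; lra.
  - intros j Hj. apply Rmult_lt_compat_r; [apply Rinv_0_lt_compat; lra|].
    specialize (H j Hj); lra.
  - intros j Hj. split.
   + apply Rmult_le_pos; [|left; apply Rinv_0_lt_compat; lra].
    pose proof (smono_le n f H 0 j ltac:(lia) Hj); lra.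
   + apply (Rmult_le_reg_r (f n - f 0%nat)); [lra|].
    unfold Rdiv. rewrite Rmult_assoc, Rinv_l by lra.
    pose proof (smono_le n f H j n Hj ltac:(lia)); lra.
Qed.

Lemma rt_props n f : (1 <= n)%nat -> smono n f ->
  rt n f 0 = 0 /\ rt n f n = 1 /\ (forall j, (j < n)%nat -> rt n f j < rt n f (S j)) /\
  (forall j, (j <= n)%nat -> 0 <= rt n f j <= 1).
Proof.
  intros Hn [H|H].
  - apply rt_props_inc; auto.
  - pose proof (rt_props_inc n (fun k => - f k) Hn (smono_neg n f H)) as (a&b&c&d).
    repeat split; intros; rewrite ?(rt_neg n f); auto.
    + apply d; auto.
    + apply d; auto.
Qed.

Lemma grid_generic n (Q : nat -> nat -> pt) (fl fm : nat -> nat -> R) :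
  (1 <= n)%nat ->
  (forall i, (i <= n)%nat -> smono n (fl i)) ->
  (forall j, (j <= n)%nat -> smono n (fun i => fm i j)) ->
  (forall i j, (i <= n)%nat -> (j <= n)%nat -> Q i j = lerp (Q i 0%nat) (Q i n) (rt n (fl i) j)) ->
  (forall i j, (i <= n)%nat -> (j <= n)%nat -> Q i j = lerp (Q 0%nat j) (Q n j) (rt n (fun i => fm i j) i)) ->
  grid_dissection n n (Q 0%nat 0%nat) (Q n 0%nat) (Q n n) (Q 0%nat n)
    (fun i => rt n (fun i => fm i 0%nat) i) (fun i => rt n (fun i => fm i n) i)
    (rt n (fl 0%nat)) (rt n (fl n)) Q.
Proof.
  intros Hn Hl Hm H1 H2.
  destruct (rt_props n _ Hn (Hm 0%nat ltac:(lia))) as (a1&a2&a3&a4).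
  destruct (rt_props n _ Hn (Hm n ltac:(lia))) as (a1'&a2'&a3'&a4').
  destruct (rt_props n _ Hn (Hl 0%nat ltac:(lia))) as (b1&b2&b3&b4).
  destruct (rt_props n _ Hn (Hl n ltac:(lia))) as (b1'&b2'&b3'&b4').
  unfold grid_dissection. repeat split; auto.
  - rewrite <- (H2 i 0%nat), <- (H2 i n) by lia.
    exists (rt n (fl i) j). split.
    + destruct (rt_props n _ Hn (Hl i H)) as (_&_&_&h). apply h; auto.
    + apply H1; auto.
  - rewrite <- (H1 0%nat j), <- (H1 n j) by lia.
    exists (rt n (fun i => fm i j) i). split.
    + destruct (rt_props n _ Hn (Hm j H0)) as (_&_&_&h). apply h; auto.
    + apply H2; auto.
Qed.

Definition geo (x0 xn : R) (n i : nat) : R := x0 * exp (INR i * (ln (xn / x0) / INR n)).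

Lemma geo_0 x0 xn n : geo x0 xn n 0 = x0.
Proof. unfold geo. simpl. rewrite Rmult_0_l, exp_0. ring. Qed.

Lemma geo_n x0 xn n : (1 <= n)%nat -> 0 < x0 -> 0 < xn -> geo x0 xn n n = xn.
Proof.
  intros Hn H0 H1. unfold geo.
  assert (0 < INR n) by (apply lt_0_INR; lia).
  replace (INR n * (ln (xn / x0) / INR n)) with (ln (xn / x0)) by (field; lra).
  rewrite exp_ln by (apply Rdiv_lt_0_compat; lra). field. lra.
Qed.

Lemma geo_S x0 xn n i : geo x0 xn n (S i) = geo x0 xn n i * exp (ln (xn / x0) / INR n).
Proof. unfold geo. rewrite S_INR, Rmult_plus_distr_r, Rmult_1_l, exp_plus. ring. Qed.

Lemma geo_pos x0 xn n i : 0 < x0 -> 0 < geo x0 xn n i.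
Proof. intros. unfold geo. pose proof (exp_pos (INR i * (ln (xn / x0) / INR n))). nra. Qed.

Lemma geo_smono x0 xn n : (1 <= n)%nat -> 0 < x0 -> 0 < xn -> x0 <> xn -> smono n (geo x0 xn n).
Proof.
  intros Hn H0 H1 Hne. assert (0 < INR n) by (apply lt_0_INR; lia).
  destruct (Rlt_dec x0 xn).
  - left. intros j _. rewrite geo_S. pose proof (geo_pos x0 xn n j H0).
    assert (1 < exp (ln (xn / x0) / INR n)).
    { rewrite <- exp_0. apply exp_increasing. apply Rdiv_lt_0_compat; auto.
      rewrite <- ln_1. apply ln_increasing; [lra|]. apply (Rmult_lt_reg_r x0); auto.
      unfold Rdiv. rewrite Rmult_assoc, Rinv_l by lra. lra. }
    nra.
  - right. intros j _. rewrite geo_S. pose proof (geo_pos x0 xn n j H0).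
    assert (exp (ln (xn / x0) / INR n) < 1).
    { rewrite <- exp_0. apply exp_increasing.
      assert (ln (xn / x0) < 0).
      { rewrite <- ln_1. apply ln_increasing; [apply Rdiv_lt_0_compat; lra|].
        apply (Rmult_lt_reg_r x0); auto. unfold Rdiv. rewrite Rmult_assoc, Rinv_l by lra. lra. }
      assert (0 < / INR n) by (apply Rinv_0_lt_compat; lra). unfold Rdiv. nra. }
    nra.
Qed.

Lemma geo_between x0 xn n i : (1 <= n)%nat -> 0 < x0 -> 0 < xn -> x0 <> xn -> (i <= n)%nat ->
  (x0 <= geo x0 xn n i <= xn) \/ (xn <= geo x0 xn n i <= x0).
Proof.
  intros Hn H0 H1 Hne Hi. pose proof (geo_0 x0 xn n) as g0. pose proof (geo_n x0 xn n Hn H0 H1) as gn.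
  destruct (geo_smono x0 xn n Hn H0 H1 Hne) as [H|H].
  - left. pose proof (smono_le n _ H 0 i ltac:(lia) Hi). pose proof (smono_le n _ H i n Hi ltac:(lia)).
    lra.
  - right. pose proof (smono_le n _ (smono_neg n _ H) 0 i ltac:(lia) Hi).
    pose proof (smono_le n _ (smono_neg n _ H) i n Hi ltac:(lia)). simpl in *. lra.
Qed.

Definition betw (x a b : R) : Prop := (a <= x <= b) \/ (b <= x <= a).

Lemma okL_box t0 tn u0 un t u : okL t0 u0 -> okL tn u0 -> okL tn un -> okL t0 un ->
  betw t t0 tn -> betw u u0 un -> okL t u.
Proof.
  unfold okL, betw. intros (a1&a2&a3) (b1&b2&b3) (c1&c2&c3) (d1&d2&d3) Ht Hu.
  destruct Ht as [[h1 h2]|[h1 h2]]; destruct Hu as [[k1 k2]|[k1 k2]];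
    (split; [lra|split; [lra|]]).
  - assert (t * u <= tn * un) by (apply Rmult_le_compat; lra). lra.
  - assert (t * u <= tn * u0) by (apply Rmult_le_compat; lra). lra.
  - assert (t * u <= t0 * un) by (apply Rmult_le_compat; lra). lra.
  - assert (t * u <= t0 * u0) by (apply Rmult_le_compat; lra). lra.
Qed.

Lemma smono_comp n (x : nat -> R) (h : R -> R) :
  smono n x -> (forall j j', (j <= n)%nat -> (j' <= n)%nat -> x j < x j' -> h (x j) < h (x j')) ->
  smono n (fun j => h (x j)).
Proof.
  intros [H|H] Hh; [left|right]; intros j Hj; apply Hh; try lia; apply H; auto.
Qed.

Lemma smono_ne n f : smono n f -> forall j, (j < n)%nat -> f j <> f (S j).
Proof. intros [H|H] j Hj; specialize (H j Hj); lra. Qed.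

Lemma smono_ne0n n f : (1 <= n)%nat -> smono n f -> f n <> f 0%nat.
Proof.
  intros Hn [H|H].
  - pose proof (smono_lt n f H 0 n ltac:(lia) ltac:(lia)); lra.
  - pose proof (smono_lt n _ (smono_neg n f H) 0 n ltac:(lia) ltac:(lia)); simpl in *; lra.
Qed.

Lemma ratio_cond t0 tn u0 un n i j : (1 <= n)%nat -> 0 < t0 -> 0 < tn -> 0 < u0 -> 0 < un ->
  (t0 * u0 = tn * un \/ tn * u0 = t0 * un) ->
  let tt := geo t0 tn n in let uu := geo u0 un n in
  (tt (S i) * uu j = tt i * uu (S j) \/ tt (S i) * uu (S j) = tt i * uu j).
Proof.
  intros Hn h1 h2 h3 h4 Hc tt uu. unfold tt, uu. rewrite !geo_S.
  destruct Hc as [Hc|Hc].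
  - right. assert (E : un / u0 = / (tn / t0)).
    { replace un with (t0 * u0 / tn) by (field_simplify_eq; lra). field; lra. }
    rewrite E, ln_Rinv by (apply Rdiv_lt_0_compat; lra).
    replace (- ln (tn / t0) / INR n) with (- (ln (tn / t0) / INR n)) by (field; apply not_0_INR; lia).
    rewrite exp_Ropp. pose proof (exp_pos (ln (tn / t0) / INR n)).
    field. lra.
  - left. assert (E : un / u0 = tn / t0).
    { replace un with (tn * u0 / t0) by (field_simplify_eq; lra). field; lra. }
    rewrite E. ring.
Qed.

Theorem Lnet_grid n M e sg t0 tn u0 un : (1 <= n)%nat -> (sg = 1 \/ sg = -1) -> e <> (0,0) ->
  t0 <> tn -> u0 <> un -> okL t0 u0 -> okL tn u0 -> okL tn un -> okL t0 un ->
  (t0 * u0 = tn * un \/ tn * u0 = t0 * un) ->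
  exists (a a' b b' : nat -> R) (X : nat -> nat -> pt),
    grid_dissection n n (fr M e sg (Lp t0 u0)) (fr M e sg (Lp tn u0))
       (fr M e sg (Lp tn un)) (fr M e sg (Lp t0 un)) a a' b b' X /\
    (forall i j, (i < n)%nat -> (j < n)%nat ->
       tangential (X i j) (X (S i) j) (X (S i) (S j)) (X i (S j))).
Proof.
  intros Hn Hs He Ht Hu H00 Hn0 Hnn H0n Hc.
  set (tt := geo t0 tn n). set (uu := geo u0 un n).
  assert (pt0 : 0 < t0) by (destruct H00; lra). assert (ptn : 0 < tn) by (destruct Hnn; lra).
  assert (pu0 : 0 < u0) by (destruct H00 as (?&?&?); lra). assert (pun : 0 < un) by (destruct Hnn as (?&?&?); lra).
  assert (tt0 : tt 0%nat = t0) by apply geo_0. assert (ttn : tt n = tn) by (apply geo_n; auto).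
  assert (uu0 : uu 0%nat = u0) by apply geo_0. assert (uun : uu n = un) by (apply geo_n; auto).
  assert (Hok : forall i j, (i <= n)%nat -> (j <= n)%nat -> okL (tt i) (uu j)).
  { intros i j Hi Hj. apply (okL_box t0 tn u0 un); auto.
    - destruct (geo_between t0 tn n i Hn pt0 ptn Ht Hi); [left|right]; auto.
    - destruct (geo_between u0 un n j Hn pu0 pun Hu Hj); [left|right]; auto. }
  assert (Stt : smono n tt) by (apply geo_smono; auto).
  assert (Suu : smono n uu) by (apply geo_smono; auto).
  set (Q := fun i j => fr M e sg (Lp (tt i) (uu j))).
  assert (Hl : forall i, (i <= n)%nat -> smono n (fun j => lam (tt i) (uu j))).
  { intros i Hi. apply (smono_comp n uu (lam (tt i))); auto.
    intros j j' Hj Hj' Hlt. pose proof (lam_diff _ _ _ (Hok i j Hi Hj) (Hok i j' Hi Hj')).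
    pose proof (pos_frac' _ _ _ (Hok i j Hi Hj) (Hok i j' Hi Hj')). nra. }
  assert (Hm : forall j, (j <= n)%nat -> smono n (fun i => mu (tt i) (uu j))).
  { intros j Hj. apply (smono_comp n tt (fun t => mu t (uu j))); auto.
    intros i i' Hi Hi' Hlt. pose proof (mu_diff _ _ _ (Hok i j Hi Hj) (Hok i' j Hi' Hj)).
    pose proof (pos_frac _ _ _ (Hok i j Hi Hj) (Hok i' j Hi' Hj)). nra. }
  pose proof (grid_generic n Q (fun i j => lam (tt i) (uu j)) (fun i j => mu (tt i) (uu j)) Hn Hl Hm) as G.
  replace (fr M e sg (Lp t0 u0)) with (Q 0%nat 0%nat) by (unfold Q; rewrite tt0, uu0; auto).
  replace (fr M e sg (Lp tn u0)) with (Q n 0%nat) by (unfold Q; rewrite ttn, uu0; auto).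
  replace (fr M e sg (Lp tn un)) with (Q n n) by (unfold Q; rewrite ttn, uun; auto).
  replace (fr M e sg (Lp t0 un)) with (Q 0%nat n) by (unfold Q; rewrite tt0, uun; auto).
  eexists _, _, _, _, Q. split.
  - apply G.
    + intros i j Hi Hj. unfold Q. rewrite <- lerp_fr. f_equal. unfold Lp. apply pl_lerp.
      apply (smono_ne0n n _ Hn (Hl i Hi)).
    + intros i j Hi Hj. unfold Q. rewrite <- lerp_fr. f_equal.
      rewrite (Lp_E _ _ (Hok i j Hi Hj)), (Lp_E _ _ (Hok 0%nat j ltac:(lia) Hj)), (Lp_E _ _ (Hok n j ltac:(lia) Hj)).
      apply pl_lerp. apply (smono_ne0n n _ Hn (Hm j Hj)).
  - intros i j Hi Hj. unfold Q. apply core_tang_tangential, core_tang_fr; auto.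
    apply cellL; try (apply Hok; lia).
    + apply (smono_ne n _ Stt); auto.
    + apply (smono_ne n _ Suu); auto.
    + apply ratio_cond; auto.
Qed.

Definition nr (v : pt) : R := sqrt (sq v).
Lemma nr_sq v : nr v * nr v = sq v.
Proof. apply sqrt_sqrt, sq_ge0. Qed.
Lemma nr_ge v : 0 <= nr v.
Proof. apply sqrt_pos. Qed.
Lemma nr_gt_x v : 0 < snd v -> - nr v < fst v < nr v.
Proof.
  intros H. pose proof (nr_sq v). pose proof (nr_ge v). unfold sq in *.
  split; nra.
Qed.

Definition tpar (p : pt) : R := snd p / (nr (vsub p Fp) + (fst p + 1)).
Definition upar (p : pt) : R := snd p / (nr (vsub p Ep) + (1 - fst p)).

Lemma vsub_F p : vsub p Fp = (fst p + 1, snd p).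
Proof. unfold vsub, Fp; simpl; f_equal; ring. Qed.
Lemma vsub_E p : vsub p Ep = (fst p - 1, snd p).
Proof. unfold vsub, Ep; simpl; f_equal; ring. Qed.

Lemma div_lt1 x D : 0 < D -> x < D -> x / D < 1.
Proof.
  intros HD H. replace 1 with (D / D) by (field; lra). unfold Rdiv.
  apply Rmult_lt_compat_r; [apply Rinv_0_lt_compat|]; lra.
Qed.

Lemma okL_par p : 0 < snd p -> okL (tpar p) (upar p).
Proof.
  intros Hy. unfold okL, tpar, upar. rewrite vsub_F, vsub_E.
  set (s1 := nr (fst p + 1, snd p)). set (s2 := nr (fst p - 1, snd p)).
  pose proof (nr_gt_x (fst p + 1, snd p) Hy) as h1. pose proof (nr_gt_x (fst p - 1, snd p) Hy) as h2.
  pose proof (nr_sq (fst p + 1, snd p)) as q1. pose proof (nr_sq (fst p - 1, snd p)) as q2.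
  fold s1 in h1, q1. fold s2 in h2, q2. simpl in *. unfold sq in *; simpl in *.
  assert (a1 : 0 < s1 + (fst p + 1)) by lra. assert (a2 : 0 < s2 + (1 - fst p)) by lra.
  split; [apply Rdiv_lt_0_compat; lra|]. split; [apply Rdiv_lt_0_compat; lra|].
  replace (snd p / (s1 + (fst p + 1)) * (snd p / (s2 + (1 - fst p))))
    with (snd p * snd p / ((s1 + (fst p + 1)) * (s2 + (1 - fst p)))) by (field; lra).
  apply div_lt1; [nra|].
  (* y^2 = (s1+p)(s1-p) < (s1+p)(s2+q) since s1 - p < s2 + q *)
  assert (Hs : s1 - (fst p + 1) < s2 + (1 - fst p)).
  {
    assert (0 < s2 + 2) by lra.
    assert (s1 * s1 < (s2 + 2) * (s2 + 2)) by nra.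
    nra. }
  nra.
Qed.

Lemma on_F_line p : 0 < snd p ->
  p = pl Fp ((nr (vsub p Fp) + (fst p + 1)) / 2) (dF (tpar p)).
Proof.
  intros Hy. unfold tpar. rewrite vsub_F.
  set (s1 := nr (fst p + 1, snd p)).
  pose proof (nr_gt_x (fst p + 1, snd p) Hy) as h1. pose proof (nr_sq (fst p + 1, snd p)) as q1.
  fold s1 in h1, q1. simpl in *. unfold sq in q1; simpl in q1.
  assert (a1 : 0 < s1 + (fst p + 1)) by lra.
  destruct p as [x y]; simpl in *. unfold pl, Fp, dF; simpl.
  f_equal; field_simplify_eq; try lra; nra.
Qed.

Lemma on_E_line p : 0 < snd p ->
  p = pl Ep ((nr (vsub p Ep) + (1 - fst p)) / 2) (dE (upar p)).
Proof.
  intros Hy. unfold upar. rewrite vsub_E.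
  set (s1 := nr (fst p - 1, snd p)).
  pose proof (nr_gt_x (fst p - 1, snd p) Hy) as h1. pose proof (nr_sq (fst p - 1, snd p)) as q1.
  fold s1 in h1, q1. simpl in *. unfold sq in q1; simpl in q1.
  assert (a1 : 0 < s1 + (1 - fst p)) by lra.
  destruct p as [x y]; simpl in *. unfold pl, Ep, dE; simpl.
  f_equal; field_simplify_eq; try lra; nra.
Qed.

Lemma meet_unique t u k k' : okL t u -> pl Fp k (dF t) = pl Ep k' (dE u) -> pl Fp k (dF t) = Lp t u.
Proof.
  intros Hok H. pose proof (Lp_E t u Hok) as H2. unfold Lp in *.
  assert (Hc : cr (dF t) (dE u) = 2 * (t + u) * (1 - t * u)) by (unfold cr, dF, dE; simpl; ring).
  destruct Hok as (a&b&c).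
  assert (Hk : (k - lam t u) * cr (dF t) (dE u) = 0).
  { unfold pl, Fp, Ep in H, H2. injection H as H1 H1'. injection H2 as H3 H3'.
    unfold cr, dF, dE in *; simpl in *. nra. }
  rewrite Hc in Hk. assert (k = lam t u).
  { apply Rmult_integral in Hk. destruct Hk; [lra|]. exfalso. nra. }
  subst; reflexivity.
Qed.

Lemma par_repr p : 0 < snd p -> p = Lp (tpar p) (upar p).
Proof.
  intros Hy. pose proof (on_F_line p Hy) as h1. pose proof (on_E_line p Hy) as h2.
  rewrite h1 at 1. apply meet_unique with ((nr (vsub p Ep) + (1 - fst p)) / 2).
  - apply okL_par; auto.
  - rewrite <- h1. exact h2.
Qed.

Lemma nr_scale k v : 0 < k -> nr (k * fst v, k * snd v) = k * nr v.
Proof.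
  intros H. unfold nr. replace (sq (k * fst v, k * snd v)) with ((k * k) * sq v)
    by (unfold sq; simpl; ring).
  rewrite sqrt_mult by (nra || apply sq_ge0). rewrite sqrt_square by lra. reflexivity.
Qed.

Lemma tpar_col p q : 0 < snd p -> 0 < snd q -> cross Fp p q = 0 -> tpar q = tpar p.
Proof.
  intros Hp Hq Hc. set (k := snd q / snd p).
  assert (Hk : 0 < k) by (apply Rdiv_lt_0_compat; auto).
  assert (Hv : vsub q Fp = (k * fst (vsub p Fp), k * snd (vsub p Fp))).
  { unfold k, vsub, Fp, cross in *; simpl in *. f_equal; field_simplify_eq; lra. }
  unfold tpar. rewrite Hv, nr_scale by auto.
  assert (Hx : fst q + 1 = k * (fst p + 1)) by (apply (f_equal fst) in Hv; unfold vsub, Fp in Hv; simpl in Hv; lra).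
  assert (Hy : snd q = k * snd p) by (unfold k; field; lra).
  rewrite Hx, Hy. pose proof (nr_gt_x (vsub p Fp) ltac:(unfold vsub, Fp; simpl; lra)).
  rewrite vsub_F in *. simpl in *.
  field. split; [lra|]. intro E0. assert (k * (nr (fst p + 1, snd p) + (fst p + 1)) = 0) by lra. apply Rmult_integral in H0; lra.
Qed.

Lemma upar_col p q : 0 < snd p -> 0 < snd q -> cross Ep p q = 0 -> upar q = upar p.
Proof.
  intros Hp Hq Hc. set (k := snd q / snd p).
  assert (Hk : 0 < k) by (apply Rdiv_lt_0_compat; auto).
  assert (Hv : vsub q Ep = (k * fst (vsub p Ep), k * snd (vsub p Ep))).
  { unfold k, vsub, Ep, cross in *; simpl in *. f_equal; field_simplify_eq; lra. }
  unfold upar. rewrite Hv, nr_scale by auto.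
  assert (Hx : 1 - fst q = k * (1 - fst p)) by (apply (f_equal fst) in Hv; unfold vsub, Ep in Hv; simpl in Hv; lra).
  assert (Hy : snd q = k * snd p) by (unfold k; field; lra).
  rewrite Hx, Hy. pose proof (nr_gt_x (vsub p Ep) ltac:(unfold vsub, Ep; simpl; lra)).
  rewrite vsub_E in *. simpl in *.
  field. split; [lra|]. intro E0. assert (k * (nr (fst p - 1, snd p) + (1 - fst p)) = 0) by lra. apply Rmult_integral in H0; lra.
Qed.

Lemma solve_k a k s r m : a <> 0 -> a * k = s * r * (Rabs a * m) -> k = s * r * m * (Rabs a / a).
Proof. intros Ha H. apply (Rmult_eq_reg_l a); auto. rewrite H. field; auto. Qed.

Lemma sgn'_mul x p : 0 < p -> Rabs (x * p) / (x * p) = Rabs x / x.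
Proof.
  intros Hp. destruct (Req_dec x 0) as [->|Hx].
  - rewrite Rmult_0_l, Rabs_R0. unfold Rdiv. rewrite Rinv_0. ring.
  - rewrite Rabs_mult, (Rabs_right p) by lra. field; lra.
Qed.

Lemma ratio_from_core t0 tn u0 un : okL t0 u0 -> okL tn u0 -> okL tn un -> okL t0 un ->
  t0 <> tn -> u0 <> un ->
  core_tang (Lp t0 u0) (Lp tn u0) (Lp tn un) (Lp t0 un) ->
  (t0 * u0 = tn * un \/ tn * u0 = t0 * un).
Proof.
  intros H00 Hn0 Hnn H0n Ht Hu (s & O & r & Hs & Hr & _ & _ & _ & _ & E1 & E2 & E3 & E4).
  rewrite (Lp_E _ _ H00), (Lp_E _ _ Hn0), cross_line, dist_line, sq_dE in E1.
  rewrite (mu_diff _ _ _ H00 Hn0) in E1.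
  pose proof (pos_frac _ _ _ H00 Hn0) as p1.
  apply solve_k in E1; [|apply Rmult_integral_contrapositive; split; lra].
  rewrite sgn'_mul in E1 by auto.
  unfold Lp in E2. rewrite cross_line, dist_line, sq_dF in E2.
  rewrite (lam_diff _ _ _ Hn0 Hnn) in E2.
  pose proof (pos_frac' _ _ _ Hn0 Hnn) as p2.
  apply solve_k in E2; [|apply Rmult_integral_contrapositive; split; lra].
  rewrite sgn'_mul in E2 by auto.
  rewrite (Lp_E _ _ Hnn), (Lp_E _ _ H0n), cross_line, dist_line, sq_dE in E3.
  rewrite (mu_diff _ _ _ Hnn H0n) in E3.
  pose proof (pos_frac _ _ _ Hnn H0n) as p3.
  apply solve_k in E3; [|apply Rmult_integral_contrapositive; split; lra].
  rewrite sgn'_mul in E3 by auto.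
  unfold Lp in E4. rewrite cross_line, dist_line, sq_dF in E4.
  rewrite (lam_diff _ _ _ H0n H00) in E4.
  pose proof (pos_frac' _ _ _ H0n H00) as p4.
  apply solve_k in E4; [|apply Rmult_integral_contrapositive; split; lra].
  rewrite sgn'_mul in E4 by auto.
  destruct O as [ox oy]. unfold cr, vsub, dE, dF, Ep, Fp in E1, E2, E3, E4; simpl in *.
  destruct H00 as (a1&a2&a3), Hnn as (b1&b2&b3).
  replace (Rabs (un - u0) / (un - u0)) with (- (Rabs (u0 - un) / (u0 - un))) in E2
    by (rewrite Rabs_minus_sym; field; lra).
  replace (Rabs (t0 - tn) / (t0 - tn)) with (- (Rabs (tn - t0) / (tn - t0))) in E3
    by (rewrite Rabs_minus_sym; field; lra).
  set (eu := Rabs (u0 - un) / (u0 - un)) in *. set (et := Rabs (tn - t0) / (tn - t0)) in *.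
  assert (G1 : oy * (tn - t0) * (1 + t0 * tn) = s * r * eu * (t0 + tn) * (1 + t0 * tn)).
  { assert (X1 : tn * ((1 - t0 * t0) * (oy - 0) - 2 * t0 * (ox - -1)) = tn * (s * r * (1 + t0 * t0) * eu)) by (rewrite E4; ring).
    assert (X2 : t0 * ((1 - tn * tn) * (oy - 0) - 2 * tn * (ox - -1)) = t0 * (s * r * (1 + tn * tn) * - eu)) by (rewrite E2; ring).
    lra. }
  assert (G2 : oy * (u0 - un) * (1 + u0 * un) = s * r * et * (u0 + un) * (1 + u0 * un)).
  { assert (X1 : un * (- (1 - u0 * u0) * (oy - 0) - 2 * u0 * (ox - 1)) = un * (s * r * (1 + u0 * u0) * et)) by (rewrite E1; ring).
    assert (X2 : u0 * (- (1 - un * un) * (oy - 0) - 2 * un * (ox - 1)) = u0 * (s * r * (1 + un * un) * - et)) by (rewrite E3; ring).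
    lra. }
  assert (q1 : 0 < 1 + t0 * tn) by nra. assert (q2 : 0 < 1 + u0 * un) by nra.
  apply Rmult_eq_reg_r in G1; [|lra]. apply Rmult_eq_reg_r in G2; [|lra].
  assert (G : s * r * (Rabs (tn - t0) * (u0 + un) - Rabs (un - u0) * (t0 + tn)) = 0).
  { replace (Rabs (tn - t0)) with (et * (tn - t0)) by (unfold et; field; lra).
    replace (Rabs (un - u0)) with (eu * (u0 - un)) by (unfold eu; rewrite Rabs_minus_sym; field; lra).
    assert (X1 : oy * (tn - t0) * (u0 - un) = s * r * eu * (t0 + tn) * (u0 - un)) by (rewrite G1; ring).
    assert (X2 : oy * (u0 - un) * (tn - t0) = s * r * et * (u0 + un) * (tn - t0)) by (rewrite G2; ring).
    lra. }
  apply Rmult_integral in G. destruct G as [G|G].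
  - exfalso. destruct Hs; subst; nra.
  - destruct (Rle_dec t0 tn); destruct (Rle_dec u0 un).
    + rewrite Rabs_right in G by lra. rewrite Rabs_right in G by lra. right. nra.
    + rewrite Rabs_right in G by lra. rewrite Rabs_left in G by lra. left. nra.
    + rewrite Rabs_left in G by lra. rewrite Rabs_right in G by lra. left. nra.
    + rewrite Rabs_left in G by lra. rewrite Rabs_left in G by lra. right. nra.
Qed.

Lemma cross_FpEp p : cross Fp Ep p = 2 * snd p.
Proof. unfold cross, Fp, Ep; simpl; ring. Qed.

Lemma case1 n A B C D : (1 <= n)%nat -> core_tang A B C D ->
  cross C D A <> cross B C D -> cross A B C <> cross B C D ->
  exists (a a' b b' : nat -> R) (X : nat -> nat -> pt),
    grid_dissection n n A B C D a a' b b' X /\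
    (forall i j, (i < n)%nat -> (j < n)%nat ->
       tangential (X i j) (X (S i) j) (X (S i) (S j)) (X i (S j))).
Proof.
  intros Hn Hct Hba Hda.
  pose proof Hct as (s & O & r & Hs & Hr & Hd & Ha & Hb & Hc & _).
  set (a := cross B C D) in *. set (b := cross C D A) in *. set (c := cross D A B) in *.
  set (d := cross A B C) in *.
  assert (Hba' : b - a <> 0) by lra. assert (Hda' : d - a <> 0) by lra.
  set (al := b / (b - a)). set (be := d / (d - a)).
  set (E := lerp A B al). set (F := lerp A D be).
  set (kA := cross F E A).
  assert (IA : kA = - (al * be * c)) by (unfold kA, E, F, c, cross, lerp; simpl; ring).
  assert (IB : b * cross F E B = a * kA).
  { unfold kA, E, F, al, be, a, b, c, d in *. destruct A as [x1 y1], B as [x2 y2], C as [x3 y3], D as [x4 y4].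
    unfold cross, lerp in *; simpl in *. field. split; auto. }
  assert (IC : c * cross F E C = a * kA).
  { unfold kA, E, F, al, be, a, b, c, d in *. destruct A as [x1 y1], B as [x2 y2], C as [x3 y3], D as [x4 y4].
    unfold cross, lerp in *; simpl in *. field. split; auto. }
  assert (ID : d * cross F E D = a * kA).
  { unfold kA, E, F, al, be, a, b, c, d in *. destruct A as [x1 y1], B as [x2 y2], C as [x3 y3], D as [x4 y4].
    unfold cross, lerp in *; simpl in *. field. split; auto. }
  assert (CFB : cross F B C = 0).
  { unfold F, be, a, d in *. destruct A as [x1 y1], B as [x2 y2], C as [x3 y3], D as [x4 y4].
    unfold cross, lerp in *; simpl in *. field. auto. }
  assert (CED : cross E D C = 0).
  { unfold E, al, a, b in *. destruct A as [x1 y1], B as [x2 y2], C as [x3 y3], D as [x4 y4].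
    unfold cross, lerp in *; simpl in *. field. auto. }
  assert (CFA : cross F A D = 0) by (unfold F, cross, lerp; simpl; ring).
  assert (CEA : cross E A B = 0) by (unfold E, cross, lerp; simpl; ring).
  assert (HkAdef : kA = cross F E A) by reflexivity.
  clearbody kA E F.
  assert (Hs2 : s * s = 1) by (destruct Hs; subst; lra).
  assert (Hab : 0 < a * b) by nra. assert (Hac : 0 < a * c) by nra. assert (Had : 0 < a * d) by nra.
  assert (HkA : kA <> 0).
  { rewrite IA. assert (al <> 0) by (unfold al; apply Rmult_integral_contrapositive; split; [intro; nra| apply Rinv_neq_0_compat; auto]).
    assert (be <> 0) by (unfold be; apply Rmult_integral_contrapositive; split; [intro; nra| apply Rinv_neq_0_compat; auto]).
    assert (c <> 0) by (intro; nra).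
    intro X. apply Ropp_eq_0_compat in X. rewrite Ropp_involutive in X.
    apply Rmult_integral in X as [X|X]; [apply Rmult_integral in X as [X|X]|]; auto. }
  set (sg := kA / Rabs kA).
  assert (Hsg : sg = 1 \/ sg = -1) by (apply sgn_pm; auto).
  assert (Hsg2 : sg * sg = 1) by (destruct Hsg as [->| ->]; lra).
  assert (HsgA : 0 < sg * kA) by (unfold sg; pose proof (sgn_help kA 1 HkA ltac:(lra)); lra).
  set (M := ((fst E + fst F) / 2, (snd E + snd F) / 2)).
  set (e := ((fst E - fst F) / 2, (snd E - snd F) / 2)).
  assert (HF : fr M e sg Fp = F) by (unfold fr, M, e, Fp; apply injective_projections; simpl; field).
  assert (HE : fr M e sg Ep = E) by (unfold fr, M, e, Ep; apply injective_projections; simpl; field).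
  assert (He : e <> (0,0)).
  { intro X. assert (E = F).
    { unfold e in X. injection X as X1 X2. apply injective_projections; lra. }
    apply HkA. rewrite HkAdef, H. unfold cross; ring. }
  set (finv := fr (Minv M e sg) (einv e sg) sg).
  assert (Hinv : forall P, fr M e sg (finv P) = P) by (intros; apply fr_inv_r; auto).
  assert (Hinv' : forall p, finv (fr M e sg p) = p) by (intros; apply fr_inv_l; auto).
  assert (HFp : finv F = Fp) by (rewrite <- HF; apply Hinv').
  assert (HEp : finv E = Ep) by (rewrite <- HE; apply Hinv').
  assert (Hcrinv : forall P Q R, cross (finv P) (finv Q) (finv R) = sg * sq (einv e sg) * cross P Q R)
    by (intros; apply cross_fr).
  assert (Hy : forall P, 0 < sg * cross F E P -> 0 < snd (finv P)).
  { intros P HP. rewrite <- HF, <- HE, <- (Hinv P), cross_fr, cross_FpEp in HP.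
    pose proof (sq_pos e He).
    replace (sg * (sg * sq e * (2 * snd (finv P)))) with ((sg * sg) * (2 * sq e) * snd (finv P)) in HP by ring.
    rewrite Hsg2 in HP. nra. }
  assert (yA : 0 < snd (finv A)) by (apply Hy; rewrite <- HkAdef; auto).
  assert (yB : 0 < snd (finv B)).
  { apply Hy. replace (cross F E B) with (a * kA / b) by (field_simplify_eq; [lra| intro; nra]).
    replace (sg * (a * kA / b)) with ((a * b) / (b * b) * (sg * kA)) by (field; intro; nra).
    apply Rmult_lt_0_compat; auto. apply Rdiv_lt_0_compat; nra. }
  assert (yC : 0 < snd (finv C)).
  { apply Hy. replace (cross F E C) with (a * kA / c) by (field_simplify_eq; [lra| intro; nra]).
    replace (sg * (a * kA / c)) with ((a * c) / (c * c) * (sg * kA)) by (field; intro; nra).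
    apply Rmult_lt_0_compat; auto. apply Rdiv_lt_0_compat; nra. }
  assert (yD : 0 < snd (finv D)).
  { apply Hy. replace (cross F E D) with (a * kA / d) by (field_simplify_eq; [lra| intro; nra]).
    replace (sg * (a * kA / d)) with ((a * d) / (d * d) * (sg * kA)) by (field; intro; nra).
    apply Rmult_lt_0_compat; auto. apply Rdiv_lt_0_compat; nra. }
  assert (colAD : cross Fp (finv A) (finv D) = 0) by (rewrite <- HFp, Hcrinv, CFA; ring).
  assert (colBC : cross Fp (finv B) (finv C) = 0) by (rewrite <- HFp, Hcrinv, CFB; ring).
  assert (colAB : cross Ep (finv A) (finv B) = 0) by (rewrite <- HEp, Hcrinv, CEA; ring).
  assert (colDC : cross Ep (finv D) (finv C) = 0) by (rewrite <- HEp, Hcrinv, CED; ring).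
  set (t0 := tpar (finv A)). set (tn := tpar (finv B)).
  set (u0 := upar (finv A)). set (un := upar (finv D)).
  assert (eA : finv A = Lp t0 u0) by (apply par_repr; auto).
  assert (qB : upar (finv B) = u0) by (apply upar_col; auto).
  assert (qD : tpar (finv D) = t0) by (apply tpar_col; auto).
  assert (qC1 : tpar (finv C) = tn) by (apply tpar_col; auto).
  assert (qC2 : upar (finv C) = un) by (apply upar_col; auto).
  assert (eB : finv B = Lp tn u0) by (rewrite (par_repr _ yB), qB; reflexivity).
  assert (eD : finv D = Lp t0 un) by (rewrite (par_repr _ yD), qD; reflexivity).
  assert (eC : finv C = Lp tn un) by (rewrite (par_repr _ yC), qC1, qC2; reflexivity).
  assert (oA : okL t0 u0) by (apply okL_par; auto).
  assert (oB : okL tn u0) by (rewrite <- qB; apply okL_par; auto).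
  assert (oD : okL t0 un) by (rewrite <- qD; apply okL_par; auto).
  assert (oC : okL tn un) by (rewrite <- qC1, <- qC2; apply okL_par; auto).
  assert (Htn : t0 <> tn).
  { intro X. assert (A = B).
    { rewrite <- (Hinv A), <- (Hinv B), eA, eB, X. reflexivity. }
    assert (d = 0) by (unfold d; rewrite H; unfold cross; ring). nra. }
  assert (Hun : u0 <> un).
  { intro X. assert (A = D).
    { rewrite <- (Hinv A), <- (Hinv D), eA, eD, X. reflexivity. }
    assert (c = 0) by (unfold c; rewrite H; unfold cross; ring). nra. }
  assert (Hct' : core_tang (finv A) (finv B) (finv C) (finv D)).
  { apply core_tang_fr; auto. apply einv_nz; auto. }
  rewrite eA, eB, eC, eD in Hct'.
  pose proof (ratio_from_core _ _ _ _ oA oB oC oD Htn Hun Hct') as Hrat.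
  destruct (Lnet_grid n M e sg t0 tn u0 un Hn Hsg He Htn Hun oA oB oC oD Hrat) as (aa & aa' & bb & bb' & X & G1 & G2).
  rewrite <- eA, <- eB, <- eC, <- eD, !Hinv in G1.
  exists aa, aa', bb, bb', X. split; auto.
Qed.

Definition F0 : pt := (0, 0).
Definition xh (t h : R) : R := h * (1 - t * t) / (2 * t).
Definition Hp (t h : R) : pt := pl F0 (h / (2 * t)) (dF t).
Definition e1 : pt := (1, 0).

Lemma Hp_h t h : 0 < t -> Hp t h = pl (0, h) (xh t h) e1.
Proof. intros. unfold Hp, pl, F0, xh, dF, e1; simpl. f_equal; field; lra. Qed.

Lemma xh_diff t t' h : 0 < t -> 0 < t' ->
  xh t' h - xh t h = (t - t') * (h * (1 + t * t') / (2 * t * t')).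
Proof. intros. unfold xh. field. lra. Qed.

Lemma sq_e1 : sqrt (sq e1) = 1.
Proof. unfold sq, e1; simpl. replace (1 * 1 + 0 * 0) with 1 by ring. apply sqrt_1. Qed.

Lemma cr_e1 Z h : cr e1 (vsub Z (0, h)) = snd Z - h.
Proof. unfold cr, e1, vsub; simpl; ring. Qed.

Lemma cellH t1 t2 h1 h2 : 0 < t1 -> 0 < t2 -> 0 < h1 -> 0 < h2 ->
  t1 <> t2 -> h1 <> h2 -> (t2 * h1 = t1 * h2 \/ t2 * h2 = t1 * h1) ->
  core_tang (Hp t1 h1) (Hp t2 h1) (Hp t2 h2) (Hp t1 h2).
Proof.
  intros pt1 pt2 ph1 ph2 Ht Hh Hc.
  set (k := (t1 - t2) * (h2 - h1)).
  assert (Hk : k <> 0) by (unfold k; intro E; apply Rmult_integral in E; destruct E; lra).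
  set (s := k / Rabs k).
  set (lo := (h1 + h2) / (2 * (t1 + t2))).
  assert (Hlo : 0 < lo) by (unfold lo; apply Rdiv_lt_0_compat; lra).
  assert (Hr : lo * Rabs (t1 - t2) = Rabs (h2 - h1) / 2).
  { unfold lo. 
    assert (X : (h1 + h2) * Rabs (t1 - t2) = (t1 + t2) * Rabs (h2 - h1)).
    { assert (Y : Rabs ((h1 + h2) * (t1 - t2)) = Rabs ((t1 + t2) * (h2 - h1))).
      { destruct Hc as [Hc|Hc].
        - replace ((h1 + h2) * (t1 - t2)) with (- ((t1 + t2) * (h2 - h1))) by nra. apply Rabs_Ropp.
        - replace ((h1 + h2) * (t1 - t2)) with ((t1 + t2) * (h2 - h1)) by nra. reflexivity. }
      rewrite !Rabs_mult, (Rabs_right (h1 + h2)), (Rabs_right (t1 + t2)) in Y by lra. exact Y. }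
    field_simplify_eq; [|lra]. nra. }
  set (O := pl F0 lo (wF t1 t2)).
  assert (HOy : snd O = (h1 + h2) / 2) by (unfold O, lo, pl, F0, wF; simpl; field; lra).
  exists s, O, (Rabs (h2 - h1) / 2).
  split; [apply sgn_pm; auto|].
  split; [apply Rdiv_lt_0_compat; [apply Rabs_pos_lt; lra|lra]|].
  pose proof (Hp_h _ h1 pt1) as a11. pose proof (Hp_h _ h1 pt2) as a21.
  pose proof (Hp_h _ h2 pt2) as a22. pose proof (Hp_h _ h2 pt1) as a12.
  pose proof (xh_diff _ _ h1 pt1 pt2) as xd1. pose proof (xh_diff _ _ h2 pt1 pt2) as xd2.
  assert (q1 : 0 < h1 * (1 + t1 * t2) / (2 * t1 * t2)) by (apply Rdiv_lt_0_compat; nra).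
  assert (q2 : 0 < h2 * (1 + t1 * t2) / (2 * t1 * t2)) by (apply Rdiv_lt_0_compat; nra).
  assert (p12 : 0 < 1 + t1 * t2) by nra.
  split; [| split; [|split; [|split]]].
  - rewrite a11, a21, cross_line, a22, cr_e1, xd1. simpl. rewrite Rmult_0_r, Rplus_0_r. unfold s.
    replace ((t1 - t2) * (h1 * (1 + t1 * t2) / (2 * t1 * t2)) * (h2 - h1)) with
      (k * (h1 * (1 + t1 * t2) / (2 * t1 * t2))) by (unfold k; ring).
    apply sgn_help; auto.
  - unfold Hp. rewrite cross_line, cr_pl, cr_dF. unfold s.
    replace ((h2 / (2 * t2) - h1 / (2 * t2)) * (h2 / (2 * t1) * (2 * (t1 - t2) * (1 + t2 * t1)))) with
      (k * (h2 / (2 * t1) * (1 + t1 * t2) / t2)) by (unfold k; field; lra).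
    apply sgn_help; auto. apply Rdiv_lt_0_compat; [|lra]. apply Rmult_lt_0_compat; [|lra].
    apply Rdiv_lt_0_compat; lra.
  - rewrite a22, a12, cross_line, a11, cr_e1. simpl. rewrite Rmult_0_r, Rplus_0_r.
    replace (xh t1 h2 - xh t2 h2) with (- (xh t2 h2 - xh t1 h2)) by ring. rewrite xd2. unfold s.
    replace (- ((t1 - t2) * (h2 * (1 + t1 * t2) / (2 * t1 * t2))) * (h1 - h2)) with
      (k * (h2 * (1 + t1 * t2) / (2 * t1 * t2))) by (unfold k; ring).
    apply sgn_help; auto.
  - unfold Hp. rewrite cross_line, cr_pl, cr_dF. unfold s.
    replace ((h1 / (2 * t1) - h2 / (2 * t1)) * (h1 / (2 * t2) * (2 * (t2 - t1) * (1 + t1 * t2)))) with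
      (k * (h1 / (2 * t2) * (1 + t1 * t2) / t1)) by (unfold k; field; lra).
    apply sgn_help; auto. apply Rdiv_lt_0_compat; [|lra]. apply Rmult_lt_0_compat; [|lra].
    apply Rdiv_lt_0_compat; lra.
  - split; [|split; [|split]].
    + rewrite a11, a21, cross_line, dist_line, sq_e1, cr_e1, HOy, xd1.
      assert (Hab : (t1 - t2) * (h1 * (1 + t1 * t2) / (2 * t1 * t2)) * (h2 - h1) =
         s * Rabs ((t1 - t2) * (h1 * (1 + t1 * t2) / (2 * t1 * t2))) * Rabs (h2 - h1)).
      { apply (sgn_help2 k (h1 * (1 + t1 * t2) / (2 * t1 * t2))); try (unfold k; ring); auto. }
      replace ((t1 - t2) * (h1 * (1 + t1 * t2) / (2 * t1 * t2)) * ((h1 + h2) / 2 - h1)) with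
        ((t1 - t2) * (h1 * (1 + t1 * t2) / (2 * t1 * t2)) * (h2 - h1) / 2) by (field; lra).
      rewrite Hab. field.
    + unfold O, Hp. rewrite cross_line, cr_pl, cr_dF_wF', dist_line, sq_dF.
      replace (Rabs (h2 - h1) / 2) with (lo * Rabs (t1 - t2)) by auto.
      assert (Hab : (h2 / (2 * t2) - h1 / (2 * t2)) * (t1 - t2) =
         s * Rabs (h2 / (2 * t2) - h1 / (2 * t2)) * Rabs (t1 - t2)).
      { apply (sgn_help2 k (/ (2 * t2))); try (unfold k; field; lra); auto; apply Rinv_0_lt_compat; lra. }
      replace ((h2 / (2 * t2) - h1 / (2 * t2)) * (lo * ((t1 - t2) * (1 + t2 * t2)))) with
        ((h2 / (2 * t2) - h1 / (2 * t2)) * (t1 - t2) * (lo * (1 + t2 * t2))) by ring.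
      rewrite Hab. ring.
    + rewrite a22, a12, cross_line, dist_line, sq_e1, cr_e1, HOy.
      replace (xh t1 h2 - xh t2 h2) with (- (xh t2 h2 - xh t1 h2)) by ring. rewrite xd2.
      assert (Hab : - ((t1 - t2) * (h2 * (1 + t1 * t2) / (2 * t1 * t2))) * (h1 - h2) =
         s * Rabs (- ((t1 - t2) * (h2 * (1 + t1 * t2) / (2 * t1 * t2)))) * Rabs (h1 - h2)).
      { apply (sgn_help2 k (h2 * (1 + t1 * t2) / (2 * t1 * t2))); try (unfold k; ring); auto. }
      replace (- ((t1 - t2) * (h2 * (1 + t1 * t2) / (2 * t1 * t2))) * ((h1 + h2) / 2 - h2)) with
        (- ((t1 - t2) * (h2 * (1 + t1 * t2) / (2 * t1 * t2))) * (h1 - h2) / 2) by (field; lra).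
      rewrite Hab, (Rabs_minus_sym h1 h2). field.
    + unfold O, Hp. rewrite cross_line, cr_pl, cr_dF_wF, dist_line, sq_dF.
      replace (Rabs (h2 - h1) / 2) with (lo * Rabs (t1 - t2)) by auto.
      assert (Hab : (h1 / (2 * t1) - h2 / (2 * t1)) * (t2 - t1) =
         s * Rabs (h1 / (2 * t1) - h2 / (2 * t1)) * Rabs (t2 - t1)).
      { apply (sgn_help2 k (/ (2 * t1))); try (unfold k; field; lra); auto; apply Rinv_0_lt_compat; lra. }
      replace ((h1 / (2 * t1) - h2 / (2 * t1)) * (lo * ((t2 - t1) * (1 + t1 * t1)))) with
        ((h1 / (2 * t1) - h2 / (2 * t1)) * (t2 - t1) * (lo * (1 + t1 * t1))) by ring.
      rewrite Hab, (Rabs_minus_sym t2 t1). ring.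
Qed.

Lemma smono_opp n f : smono n (fun i => - f i) -> smono n f.
Proof. intros [H|H]; [right|left]; intros j Hj; specialize (H j Hj); simpl in H; lra. Qed.

Theorem Hnet_grid n M e sg t0 tn h0 hn : (1 <= n)%nat -> (sg = 1 \/ sg = -1) -> e <> (0,0) ->
  t0 <> tn -> h0 <> hn -> 0 < t0 -> 0 < tn -> 0 < h0 -> 0 < hn ->
  (t0 * h0 = tn * hn \/ tn * h0 = t0 * hn) ->
  exists (a a' b b' : nat -> R) (X : nat -> nat -> pt),
    grid_dissection n n (fr M e sg (Hp t0 h0)) (fr M e sg (Hp tn h0))
       (fr M e sg (Hp tn hn)) (fr M e sg (Hp t0 hn)) a a' b b' X /\
    (forall i j, (i < n)%nat -> (j < n)%nat ->
       tangential (X i j) (X (S i) j) (X (S i) (S j)) (X i (S j))).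
Proof.
  intros Hn Hs He Ht Hh pt0 ptn ph0 phn Hc.
  set (tt := geo t0 tn n). set (uu := geo h0 hn n).
  assert (tt0 : tt 0%nat = t0) by apply geo_0. assert (ttn : tt n = tn) by (apply geo_n; auto).
  assert (uu0 : uu 0%nat = h0) by apply geo_0. assert (uun : uu n = hn) by (apply geo_n; auto).
  assert (Ptt : forall i, 0 < tt i) by (intros; apply geo_pos; auto).
  assert (Puu : forall i, 0 < uu i) by (intros; apply geo_pos; auto).
  assert (Stt : smono n tt) by (apply geo_smono; auto).
  assert (Suu : smono n uu) by (apply geo_smono; auto).
  set (Q := fun i j => fr M e sg (Hp (tt i) (uu j))).
  assert (Hl : forall i, (i <= n)%nat -> smono n (fun j => uu j / (2 * tt i))).
  { intros i Hi. apply (smono_comp n uu (fun h => h / (2 * tt i))); auto.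
    intros j j' Hj Hj' Hlt. specialize (Ptt i). unfold Rdiv.
    apply Rmult_lt_compat_r; auto. apply Rinv_0_lt_compat; lra. }
  assert (Hm : forall j, (j <= n)%nat -> smono n (fun i => xh (tt i) (uu j))).
  { intros j Hj. apply smono_opp. apply (smono_comp n tt (fun t => - xh t (uu j))); auto.
    intros i i' Hi Hi' Hlt. pose proof (xh_diff _ _ (uu j) (Ptt i) (Ptt i')).
    assert (0 < uu j * (1 + tt i * tt i') / (2 * tt i * tt i')).
    { specialize (Puu j). pose proof (Ptt i). pose proof (Ptt i'). assert (0 < tt i * tt i') by (apply Rmult_lt_0_compat; auto). apply Rdiv_lt_0_compat; [apply Rmult_lt_0_compat; lra | lra]. }
    nra. }
  pose proof (grid_generic n Q (fun i j => uu j / (2 * tt i)) (fun i j => xh (tt i) (uu j)) Hn Hl Hm) as G.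
  replace (fr M e sg (Hp t0 h0)) with (Q 0%nat 0%nat) by (unfold Q; rewrite tt0, uu0; auto).
  replace (fr M e sg (Hp tn h0)) with (Q n 0%nat) by (unfold Q; rewrite ttn, uu0; auto).
  replace (fr M e sg (Hp tn hn)) with (Q n n) by (unfold Q; rewrite ttn, uun; auto).
  replace (fr M e sg (Hp t0 hn)) with (Q 0%nat n) by (unfold Q; rewrite tt0, uun; auto).
  eexists _, _, _, _, Q. split.
  - apply G.
    + intros i j Hi Hj. unfold Q. rewrite <- lerp_fr. f_equal. unfold Hp. apply pl_lerp.
      apply (smono_ne0n n _ Hn (Hl i Hi)).
    + intros i j Hi Hj. unfold Q. rewrite <- lerp_fr. f_equal.
      rewrite !Hp_h by auto.
      apply pl_lerp. apply (smono_ne0n n _ Hn (Hm j Hj)).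
  - intros i j Hi Hj. unfold Q. apply core_tang_tangential, core_tang_fr; auto.
    apply cellH; auto.
    + apply (smono_ne n _ Stt); auto.
    + apply (smono_ne n _ Suu); auto.
    + apply ratio_cond; auto.
Qed.

Definition tpar0 (p : pt) : R := snd p / (nr p + fst p).

Lemma tpar0_pos p : 0 < snd p -> 0 < tpar0 p.
Proof. intros H. pose proof (nr_gt_x p H). unfold tpar0. apply Rdiv_lt_0_compat; lra. Qed.

Lemma Hp_repr p : 0 < snd p -> p = Hp (tpar0 p) (snd p).
Proof.
  intros Hy. pose proof (nr_gt_x p Hy) as h1. pose proof (nr_sq p) as q1.
  unfold tpar0, Hp, pl, F0, dF. destruct p as [x y]; simpl in *. unfold sq in q1; simpl in q1.
  set (s := nr (x, y)) in *. assert (0 < s + x) by lra.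
  f_equal; field_simplify_eq; try (split; lra); try lra; try nra.
Qed.

Lemma tpar0_col p q : 0 < snd p -> 0 < snd q -> cross F0 p q = 0 -> tpar0 q = tpar0 p.
Proof.
  intros Hp Hq Hc. set (k := snd q / snd p).
  assert (Hk : 0 < k) by (apply Rdiv_lt_0_compat; auto).
  assert (Hv : q = (k * fst p, k * snd p)).
  { unfold k, F0, cross in *; simpl in *. destruct q as [q1 q2]; simpl in *. f_equal; field_simplify_eq; lra. }
  unfold tpar0. rewrite Hv, nr_scale by auto. simpl.
  pose proof (nr_gt_x p Hp). field. split; [lra|]. intro E0.
  assert (k * (nr p + fst p) = 0) by lra. apply Rmult_integral in H0; lra.
Qed.

Lemma pos3 h t0 tn : 0 < h -> 0 < t0 -> 0 < tn -> 0 < h * (1 + t0 * tn) / (2 * t0 * tn).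
Proof.
  intros. assert (0 < t0 * tn) by (apply Rmult_lt_0_compat; auto).
  apply Rdiv_lt_0_compat; [apply Rmult_lt_0_compat; lra | lra].
Qed.

Lemma ratio_from_core_H t0 tn h0 hn : 0 < t0 -> 0 < tn -> 0 < h0 -> 0 < hn ->
  t0 <> tn -> h0 <> hn ->
  core_tang (Hp t0 h0) (Hp tn h0) (Hp tn hn) (Hp t0 hn) ->
  (t0 * h0 = tn * hn \/ tn * h0 = t0 * hn).
Proof.
  intros pt0 ptn ph0 phn Ht Hh (s & O & r & Hs & Hr & _ & _ & _ & _ & E1 & E2 & E3 & E4).
  rewrite (Hp_h t0 h0), (Hp_h tn h0), cross_line, dist_line, sq_e1, cr_e1, xh_diff in E1 by auto.
  apply solve_k in E1; [|apply Rmult_integral_contrapositive; split; [lra|apply Rgt_not_eq, pos3; auto]].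
  rewrite sgn'_mul in E1 by (apply pos3; auto).
  rewrite (Hp_h tn hn), (Hp_h t0 hn), cross_line, dist_line, sq_e1, cr_e1 in E3 by auto.
  replace (xh t0 hn - xh tn hn) with ((tn - t0) * (hn * (1 + t0 * tn) / (2 * t0 * tn))) in E3
    by (unfold xh; field; lra).
  apply solve_k in E3; [|apply Rmult_integral_contrapositive; split; [lra|apply Rgt_not_eq, pos3; auto]].
  rewrite sgn'_mul in E3 by (apply pos3; auto).
  unfold Hp in E2, E4. rewrite cross_line, dist_line, sq_dF in E2, E4.
  replace (hn / (2 * tn) - h0 / (2 * tn)) with ((hn - h0) * / (2 * tn)) in E2 by (field; lra).
  replace (h0 / (2 * t0) - hn / (2 * t0)) with ((h0 - hn) * / (2 * t0)) in E4 by (field; lra).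
  apply solve_k in E2; [|apply Rmult_integral_contrapositive; split; [lra|apply Rinv_neq_0_compat; lra]].
  apply solve_k in E4; [|apply Rmult_integral_contrapositive; split; [lra|apply Rinv_neq_0_compat; lra]].
  rewrite sgn'_mul in E2 by (apply Rinv_0_lt_compat; lra).
  rewrite sgn'_mul in E4 by (apply Rinv_0_lt_compat; lra).
  replace (Rabs (h0 - hn) / (h0 - hn)) with (- (Rabs (hn - h0) / (hn - h0))) in E4
    by (rewrite Rabs_minus_sym; field; lra).
  replace (Rabs (tn - t0) / (tn - t0)) with (- (Rabs (t0 - tn) / (t0 - tn))) in E3
    by (rewrite Rabs_minus_sym; field; lra).
  set (eh := Rabs (hn - h0) / (hn - h0)) in *. set (et := Rabs (t0 - tn) / (t0 - tn)) in *.
  destruct O as [ox oy]. unfold cr, vsub, dF, F0 in E2, E4; simpl in *.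
  assert (G1 : oy * (tn - t0) * (1 + t0 * tn) = - s * r * eh * (t0 + tn) * (1 + t0 * tn)).
  { assert (X1 : tn * ((1 - t0 * t0) * (oy - 0) - 2 * t0 * (ox - 0)) = tn * (s * r * (1 + t0 * t0) * - eh)) by (rewrite E4; ring).
    assert (X2 : t0 * ((1 - tn * tn) * (oy - 0) - 2 * tn * (ox - 0)) = t0 * (s * r * (1 + tn * tn) * eh)) by (rewrite E2; ring).
    lra. }
  assert (q1 : 0 < 1 + t0 * tn) by nra.
  apply Rmult_eq_reg_r in G1; [|lra].
  assert (G : Rabs (tn - t0) * (h0 + hn) = Rabs (hn - h0) * (t0 + tn)).
  { replace (Rabs (tn - t0)) with (- et * (tn - t0)) by (unfold et; rewrite Rabs_minus_sym; field; lra).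
    replace (Rabs (hn - h0)) with (eh * (hn - h0)) by (unfold eh; field; lra).
    replace (h0 + hn) with (2 * oy) by lra. replace (hn - h0) with (2 * (s * r * et)) by lra.
    replace (- et * (tn - t0) * (2 * oy)) with (- 2 * et * (oy * (tn - t0))) by ring.
    rewrite G1. ring. }
  destruct (Rle_dec t0 tn); destruct (Rle_dec h0 hn).
  + rewrite Rabs_right in G by lra. rewrite Rabs_right in G by lra. right. nra.
  + rewrite Rabs_right in G by lra. rewrite Rabs_left in G by lra. left. nra.
  + rewrite Rabs_left in G by lra. rewrite Rabs_right in G by lra. left. nra.
  + rewrite Rabs_left in G by lra. rewrite Rabs_left in G by lra. right. nra.
Qed.

Lemma cr_fr_y M e sg p : cr e (vsub (fr M e sg p) M) = sg * sq e * snd p.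
Proof. unfold cr, vsub, fr, sq; simpl; ring. Qed.

Lemma case2 n A B C D : (1 <= n)%nat -> core_tang A B C D ->
  cross C D A = cross B C D -> cross A B C <> cross B C D ->
  exists (a a' b b' : nat -> R) (X : nat -> nat -> pt),
    grid_dissection n n A B C D a a' b b' X /\
    (forall i j, (i < n)%nat -> (j < n)%nat ->
       tangential (X i j) (X (S i) j) (X (S i) (S j)) (X i (S j))).
Proof.
  intros Hn Hct Hba Hda.
  pose proof Hct as (s & O & r & Hs & Hr & Hd & Ha & Hb & Hc & _).
  set (a := cross B C D) in *. set (b := cross C D A) in *. set (c := cross D A B) in *.
  set (d := cross A B C) in *.
  assert (Hda' : d - a <> 0) by lra.
  set (be := d / (d - a)). set (F := lerp A D be).
  set (e := vsub B A).
  set (kA := cr e (vsub A F)).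
  assert (IA : kA = - (be * c)) by (unfold kA, e, F, c, cross, cr, vsub, lerp; simpl; ring).
  assert (IB : cr e (vsub B F) = kA) by (unfold kA, e, cr, vsub; simpl; ring).
  assert (IDD : d * cr e (vsub D F) = a * kA).
  { unfold kA, e, F, be, a, c, d in *. destruct A as [x1 y1], B as [x2 y2], C as [x3 y3], D as [x4 y4].
    unfold cross, cr, vsub, lerp in *; simpl in *. field. auto. }
  assert (IC : cr e (vsub C F) = cr e (vsub D F)).
  { assert (cr e (vsub C F) - cr e (vsub D F) = a - b) by (unfold e, b, a, cross, cr, vsub; simpl; ring).
    lra. }
  assert (CFB : cross F B C = 0).
  { unfold F, be, a, d in *. destruct A as [x1 y1], B as [x2 y2], C as [x3 y3], D as [x4 y4].
    unfold cross, lerp in *; simpl in *. field. auto. }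
  assert (CFA : cross F A D = 0) by (unfold F, cross, lerp; simpl; ring).
  assert (HkAdef : kA = cr e (vsub A F)) by reflexivity.
  clearbody kA F.
  assert (Hs2 : s * s = 1) by (destruct Hs; subst; lra).
  assert (Had : 0 < a * d) by nra. assert (Hac : 0 < a * c) by nra.
  assert (HkA : kA <> 0).
  { rewrite IA. assert (be <> 0) by (unfold be; apply Rmult_integral_contrapositive; split; [intro; nra| apply Rinv_neq_0_compat; auto]).
    assert (c <> 0) by (intro; nra).
    intro X. apply Ropp_eq_0_compat in X. rewrite Ropp_involutive in X.
    apply Rmult_integral in X as [X|X]; auto. }
  set (sg := kA / Rabs kA).
  assert (Hsg : sg = 1 \/ sg = -1) by (apply sgn_pm; auto).
  assert (Hsg2 : sg * sg = 1) by (destruct Hsg as [->| ->]; lra).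
  assert (HsgA : 0 < sg * kA) by (unfold sg; pose proof (sgn_help kA 1 HkA ltac:(lra)); lra).
  assert (He : e <> (0,0)).
  { intro X. assert (A = B).
    { unfold e, vsub in X. injection X as X1 X2. apply injective_projections; lra. }
    assert (d = 0) by (unfold d; rewrite H; unfold cross; ring). nra. }
  set (finv := fr (Minv F e sg) (einv e sg) sg).
  assert (Hinv : forall P, fr F e sg (finv P) = P) by (intros; apply fr_inv_r; auto).
  assert (Hinv' : forall p, finv (fr F e sg p) = p) by (intros; apply fr_inv_l; auto).
  assert (HF0 : finv F = F0).
  { replace F with (fr F e sg F0) at 1 by (unfold fr, F0; apply injective_projections; simpl; ring).
    apply Hinv'. }
  assert (Hcrinv : forall P Q R, cross (finv P) (finv Q) (finv R) = sg * sq (einv e sg) * cross P Q R)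
    by (intros; apply cross_fr).
  pose proof (sq_pos e He) as Hqe.
  assert (Hyv : forall P, sg * cr e (vsub P F) = sq e * snd (finv P)).
  { intros P. rewrite <- (Hinv P) at 1. rewrite cr_fr_y.
    replace (sg * (sg * sq e * snd (finv P))) with ((sg * sg) * sq e * snd (finv P)) by ring.
    rewrite Hsg2. ring. }
  assert (yA : 0 < snd (finv A)) by (pose proof (Hyv A); rewrite <- HkAdef in *; nra).
  assert (yAB : snd (finv B) = snd (finv A)).
  { pose proof (Hyv A) as X1. pose proof (Hyv B) as X2. rewrite IB in X2. rewrite <- HkAdef in X1.
    apply (Rmult_eq_reg_l (sq e)); lra. }
  assert (yD : 0 < snd (finv D)).
  { pose proof (Hyv D) as X. 
    assert (0 < sg * cr e (vsub D F)).
    { replace (cr e (vsub D F)) with (a * kA / d) by (field_simplify_eq; [lra| intro; nra]).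
      replace (sg * (a * kA / d)) with ((a * d) / (d * d) * (sg * kA)) by (field; intro; nra).
      apply Rmult_lt_0_compat; auto. apply Rdiv_lt_0_compat; nra. }
    nra. }
  assert (yCD : snd (finv C) = snd (finv D)).
  { pose proof (Hyv C) as X1. pose proof (Hyv D) as X2. rewrite IC in X1.
    apply (Rmult_eq_reg_l (sq e)); lra. }
  assert (yB : 0 < snd (finv B)) by lra. assert (yC : 0 < snd (finv C)) by lra.
  assert (colAD : cross F0 (finv A) (finv D) = 0) by (rewrite <- HF0, Hcrinv, CFA; ring).
  assert (colBC : cross F0 (finv B) (finv C) = 0) by (rewrite <- HF0, Hcrinv, CFB; ring).
  set (t0 := tpar0 (finv A)). set (tn := tpar0 (finv B)).
  set (h0 := snd (finv A)). set (hn := snd (finv D)).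
  assert (qD : tpar0 (finv D) = t0) by (apply tpar0_col; auto).
  assert (qC : tpar0 (finv C) = tn) by (apply tpar0_col; auto).
  assert (eA : finv A = Hp t0 h0) by (apply Hp_repr; auto).
  assert (eB : finv B = Hp tn h0) by (rewrite (Hp_repr _ yB), yAB; reflexivity).
  assert (eD : finv D = Hp t0 hn) by (rewrite (Hp_repr _ yD), qD; reflexivity).
  assert (eC : finv C = Hp tn hn) by (rewrite (Hp_repr _ yC), qC, yCD; reflexivity).
  assert (pt0 : 0 < t0) by (apply tpar0_pos; auto).
  assert (ptn : 0 < tn) by (apply tpar0_pos; auto).
  assert (Htn : t0 <> tn).
  { intro X. assert (A = B).
    { rewrite <- (Hinv A), <- (Hinv B), eA, eB, X. reflexivity. }
    assert (d = 0) by (unfold d; rewrite H; unfold cross; ring). nra. }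
  assert (Hhn : h0 <> hn).
  { intro X. assert (A = D).
    { rewrite <- (Hinv A), <- (Hinv D), eA, eD, X. reflexivity. }
    assert (c = 0) by (unfold c; rewrite H; unfold cross; ring). nra. }
  assert (Hct' : core_tang (finv A) (finv B) (finv C) (finv D)).
  { apply core_tang_fr; auto. apply einv_nz; auto. }
  rewrite eA, eB, eC, eD in Hct'.
  pose proof (ratio_from_core_H _ _ _ _ pt0 ptn yA yD Htn Hhn Hct') as Hrat.
  destruct (Hnet_grid n F e sg t0 tn h0 hn Hn Hsg He Htn Hhn pt0 ptn yA yD Hrat) as (aa & aa' & bb & bb' & X & G1 & G2).
  rewrite <- eA, <- eB, <- eC, <- eD, !Hinv in G1.
  exists aa, aa', bb, bb', X. split; auto.
Qed.

Lemma case3 n A B C D : (1 <= n)%nat -> core_tang A B C D ->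
  cross C D A <> cross B C D -> cross A B C = cross B C D ->
  exists (a a' b b' : nat -> R) (X : nat -> nat -> pt),
    grid_dissection n n A B C D a a' b b' X /\
    (forall i j, (i < n)%nat -> (j < n)%nat ->
       tangential (X i j) (X (S i) j) (X (S i) (S j)) (X i (S j))).
Proof.
  intros Hn Hct H1 H2.
  assert (Hct' : core_tang A D C B) by (apply core_tang_rev; auto).
  destruct (case2 n A D C B Hn Hct') as (a & a' & b & b' & X & G & T).
  - replace (cross C B A) with (- cross A B C) by (unfold cross; ring).
    replace (cross D C B) with (- cross B C D) by (unfold cross; ring). lra.
  - replace (cross A D C) with (- cross C D A) by (unfold cross; ring).
    replace (cross D C B) with (- cross B C D) by (unfold cross; ring). lra.
  - exists b, b', a, a', (fun i j => X j i).
    destruct G as (g1&g2&g3&g4&g5&g6&g7&g8&g9&g10&g11).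
    split.
    + repeat split; auto; try (intros; apply g10; auto); try (intros; apply g5; auto).
      * apply (g11 j i); auto.
      * apply (g11 j i); auto.
    + intros i j Hi Hj. apply core_tang_tangential. apply core_tang_rev.
      apply tangential_core. apply T; auto.
Qed.

Lemma case4 n A B C D : (1 <= n)%nat -> core_tang A B C D ->
  cross C D A = cross B C D -> cross A B C = cross B C D ->
  exists (a a' b b' : nat -> R) (X : nat -> nat -> pt),
    grid_dissection n n A B C D a a' b b' X /\
    (forall i j, (i < n)%nat -> (j < n)%nat ->
       tangential (X i j) (X (S i) j) (X (S i) (S j)) (X i (S j))).
Proof.
  intros Hn Hct H1 H2.
  pose proof Hct as (s & O & r & Hs & Hr & Hd & Ha & Hb & Hc & _).
  assert (HC : C = (fst B + fst D - fst A, snd B + snd D - snd A)).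
  { set (u := vsub B A). set (v := vsub D A).
    set (dx := fst C - (fst B + fst D - fst A)). set (dy := snd C - (snd B + snd D - snd A)).
    assert (l1 : cr (dx, dy) u = 0) by (unfold dx, dy, u, cr, vsub; unfold cross in H1; simpl in *; nra).
    assert (l2 : cr (dx, dy) v = 0) by (unfold dx, dy, v, cr, vsub; unfold cross in H2, H1; simpl in *; nra).
    assert (cuv : cr u v <> 0).
    { unfold u, v, cr, vsub; simpl. intro X. unfold cross in Hc. destruct Hs; subst; nra. }
    assert (dx * cr u v = fst u * cr (dx, dy) v - fst v * cr (dx, dy) u) by (unfold cr; simpl; ring).
    assert (dy * cr u v = snd u * cr (dx, dy) v - snd v * cr (dx, dy) u) by (unfold cr; simpl; ring).
    rewrite l1, l2 in *.
    assert (dx = 0) by (apply (Rmult_eq_reg_r (cr u v)); auto; lra).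
    assert (dy = 0) by (apply (Rmult_eq_reg_r (cr u v)); auto; lra).
    unfold dx, dy in *. apply injective_projections; simpl; lra. }
  assert (Hn' : 0 < INR n) by (apply lt_0_INR; lia).
  set (Q := fun i j : nat => (fst A + INR i / INR n * (fst B - fst A) + INR j / INR n * (fst D - fst A),
                             snd A + INR i / INR n * (snd B - snd A) + INR j / INR n * (snd D - snd A))).
  assert (Hinc : forall j, (j < n)%nat -> INR j < INR (S j)) by (intros; apply lt_INR; lia).
  pose proof (grid_generic n Q (fun i j => INR j) (fun i j => INR i) Hn
     (fun i _ => or_introl (Hinc)) (fun j _ => or_introl (Hinc))) as G.
  assert (q00 : Q 0%nat 0%nat = A) by (unfold Q; simpl; apply injective_projections; simpl; field; lra).
  assert (qn0 : Q n 0%nat = B) by (unfold Q; simpl; apply injective_projections; simpl; field; lra).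
  assert (q0n : Q 0%nat n = D) by (unfold Q; simpl; apply injective_projections; simpl; field; lra).
  assert (qnn : Q n n = C) by (rewrite HC; unfold Q; simpl; apply injective_projections; simpl; field; lra).
  rewrite q00, qn0, q0n, qnn in G.
  eexists _, _, _, _, Q. split.
  - apply G; intros i j Hi Hj; unfold Q, rt, lerp; simpl; apply injective_projections; simpl; field; lra.
  - intros i j Hi Hj.
    set (M := (fst (Q i j) - fst A / INR n, snd (Q i j) - snd A / INR n)).
    set (e := (/ INR n, 0)).
    assert (Hfr : forall P, fr M e 1 P = (fst (Q i j) + (fst P - fst A) / INR n, snd (Q i j) + (snd P - snd A) / INR n)).
    { intros P. unfold fr, M, e. apply injective_projections; simpl; field; lra. }
    assert (He : e <> (0,0)).
    { unfold e. intro X. injection X as X. apply Rinv_neq_0_compat in X; auto; lra. }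
    pose proof (core_tang_fr M e 1 _ _ _ _ ltac:(left; reflexivity) He Hct) as K.
    rewrite !Hfr in K.
    apply core_tang_tangential.
    replace (Q i j) with (fst (Q i j) + (fst A - fst A) / INR n, snd (Q i j) + (snd A - snd A) / INR n)
      by (apply injective_projections; simpl; field; lra).
    replace (Q (S i) j) with (fst (Q i j) + (fst B - fst A) / INR n, snd (Q i j) + (snd B - snd A) / INR n)
      by (unfold Q; rewrite S_INR; apply injective_projections; simpl; field; lra).
    replace (Q (S i) (S j)) with (fst (Q i j) + (fst C - fst A) / INR n, snd (Q i j) + (snd C - snd A) / INR n)
      by (rewrite HC; unfold Q; rewrite !S_INR; apply injective_projections; simpl; field; lra).
    replace (Q i (S j)) with (fst (Q i j) + (fst D - fst A) / INR n, snd (Q i j) + (snd D - snd A) / INR n)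
      by (unfold Q; rewrite S_INR; apply injective_projections; simpl; field; lra).
    exact K.
Qed.

Theorem main_thm :
  forall (n : nat), (2 <= n)%nat ->
  forall A B C D : pt, tangential A B C D ->
  exists (a a' b b' : nat -> R) (X : nat -> nat -> pt),
    grid_dissection n n A B C D a a' b b' X /\
    (forall i j, (i < n)%nat -> (j < n)%nat ->
       tangential (X i j) (X (S i) j) (X (S i) (S j)) (X i (S j))).
Proof.
  intros n Hn A B C D HT.
  assert (Hn1 : (1 <= n)%nat) by lia.
  pose proof (tangential_core _ _ _ _ HT) as Hct.
  destruct (Req_dec (cross C D A) (cross B C D)); destruct (Req_dec (cross A B C) (cross B C D)).
  - apply case4; auto.
  - apply case2; auto.
  - apply case3; auto.
  - apply case1; auto.
Qed.


Theorem mainTheorem1 :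
  forall (n : nat), (2 <= n)%nat ->
  forall A B C D : pt, tangential A B C D ->
  exists (a a' b b' : nat -> R) (X : nat -> nat -> pt),
    grid_dissection n n A B C D a a' b b' X /\
    (forall i j, (i < n)%nat -> (j < n)%nat ->
       tangential (X i j) (X (S i) j) (X (S i) (S j)) (X i (S j))).
Proof. exact main_thm. Qed.
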